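(* Let $\mathcal{R}$ be a left-linear TRS and $\mathcal{C}\subseteq\mathcal{R}$ such that $t\leftrightarrow^*_\mathcal{C}u$ for every parallel critical pair $(t,u)$ between $\mathcal{R}$ and $\mathcal{R}$, and $\ell\to_\mathcal{C}^*r$ for every rule $\ell\to r\in\mathcal{R}{\restriction}_\mathcal{C}$. Then $\mathcal{R}$ is confluent if and only if $\mathcal{C}$ is confluent.
   Context: A TRS is a set of rules $\ell\to r$ ($\ell\notin\mathcal{V}$, $\mathcal{V}ar(r)\subseteq\mathcal{V}ar(\ell)$); left-linear: no variable repeated in a left-hand side; confluent: ${}\leftarrow^*\cdot\to^*\subseteq\to^*\cdot\leftarrow^*$; $\leftrightarrow^*_\mathcal{C}$ the conversion relation of $\mathcal{C}$. $\mathcal{F}un(\mathcal{C})$ is the set of function symbols occurring in rules of $\mathcal{C}$, and $\mathcal{R}{\restriction}_\mathcal{C}=\{\ell\to r\in\mathcal{R}\mid\mathcal{F}un(\ell)\subseteq\mathcal{F}un(\mathcal{C})\}$. Parallel critical pair between $\mathcal{R}$ and $\mathcal{R}$: for variants (renamings) $\ell\to r$ and $\ell_p\to r_p$ ($p\in P$) of $\mathcal{R}$-rules, pairwise variable-disjoint, where $P$ is a non-empty set of pairwise parallel (no one a prefix of another) function-symbol positions of $\ell$, $\sigma$ a most general unifier of $\{\ell_p\approx\ell|_p\}_{p\in P}$, and $\ell_\epsilon\to r_\epsilon$ not a variant of $\ell\to r$ if $P=\{\epsilon\}$ (root): the pair $((\ell\sigma)[r_p\sigma]_{p\in P}, r\sigma)$.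 *)

(* Defs.v *)
From Stdlib Require Import List Relations.
Import ListNotations.
Set Implicit Arguments.

(** Terms over function symbols F and variables nat (countably infinite),
    unsorted (variadic) as in IsaFoR. *)
Inductive term (F : Type) : Type :=
| Var : nat -> term F
| Fun : F -> list (term F) -> term F.
Arguments Var {F} _.
Arguments Fun {F} _ _.

Definition rule (F : Type) : Type := (term F * term F)%type.

Fixpoint apply_subst {F} (s : nat -> term F) (t : term F) : term F :=
  match t with
  | Var x => s x
  | Fun f ts => Fun f (map (apply_subst s) ts)
  end.

Fixpoint vars {F} (t : term F) : list nat :=
  match t with
  | Var x => [x]
  | Fun _ ts => flat_map vars ts
  end.

Fixpoint funs {F} (t : term F) : list F :=
  match t with
  | Var _ => []
  | Fun f ts => f :: flat_map funs ts
  end.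

Definition pos := list nat.

Fixpoint subterm_at {F} (t : term F) (p : pos) : option (term F) :=
  match p with
  | [] => Some t
  | i :: q =>
      match t with
      | Var _ => None
      | Fun _ ts =>
          match nth_error ts i with
          | Some u => subterm_at u q
          | None => None
          end
      end
  end.

(** total version (only used at valid positions) *)
Definition subt {F} (t : term F) (p : pos) : term F :=
  match subterm_at t p with Some s => s | None => t end.

Fixpoint map_nth {A} (g : A -> A) (i : nat) (l : list A) : list A :=
  match l, i with
  | [], _ => []
  | a :: l', 0 => g a :: l'
  | a :: l', S j => a :: map_nth g j l'
  end.

Fixpoint replace_at {F} (t : term F) (p : pos) (u : term F) : term F :=
  match p with
  | [] => u
  | i :: q =>
      match t with
      | Var _ => t
      | Fun f ts => Fun f (map_nth (fun s => replace_at s q u) i ts)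
      end
  end.

Definition prefix (p q : pos) : Prop := exists r, q = p ++ r.
Definition parallel (p q : pos) : Prop := ~ prefix p q /\ ~ prefix q p.

Definition fun_pos {F} (t : term F) (p : pos) : Prop :=
  exists f ts, subterm_at t p = Some (Fun f ts).

Definition wf_rule {F} (lr : rule F) : Prop :=
  (forall x, fst lr <> Var x) /\ incl (vars (snd lr)) (vars (fst lr)).

Definition TRS {F} (R : rule F -> Prop) : Prop :=
  forall lr, R lr -> wf_rule lr.

Definition left_linear {F} (R : rule F -> Prop) : Prop :=
  forall l r, R (l, r) -> NoDup (vars l).

Definition rstep {F} (R : rule F -> Prop) (s t : term F) : Prop :=
  exists l r p (sigma : nat -> term F),
    R (l, r) /\ subterm_at s p = Some (apply_subst sigma l) /\
    t = replace_at s p (apply_subst sigma r).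

Definition rsteps {F} (R : rule F -> Prop) := clos_refl_trans (term F) (rstep R).
Definition conv {F} (R : rule F -> Prop) := clos_refl_sym_trans (term F) (rstep R).

Definition confluent {F} (R : rule F -> Prop) : Prop :=
  forall s t u, rsteps R s t -> rsteps R s u ->
    exists v, rsteps R t v /\ rsteps R u v.

Definition fun_of {F} (C : rule F -> Prop) (f : F) : Prop :=
  exists l r, C (l, r) /\ (In f (funs l) \/ In f (funs r)).

Definition restrict {F} (R C : rule F -> Prop) (lr : rule F) : Prop :=
  R lr /\ forall f, In f (funs (fst lr)) -> fun_of C f.

Definition renaming (rho : nat -> nat) : Prop :=
  exists rho', (forall x, rho' (rho x) = x) /\ (forall x, rho (rho' x) = x).

Definition variant {F} (lr' lr : rule F) : Prop :=
  exists rho, renaming rho /\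
    fst lr' = apply_subst (fun x => Var (rho x)) (fst lr) /\
    snd lr' = apply_subst (fun x => Var (rho x)) (snd lr).

Definition variant_in {F} (R : rule F -> Prop) (lr' : rule F) : Prop :=
  exists lr, R lr /\ variant lr' lr.

Definition rule_vars {F} (lr : rule F) : list nat := vars (fst lr) ++ vars (snd lr).

Definition var_disjoint {F} (a b : rule F) : Prop :=
  forall x, In x (rule_vars a) -> ~ In x (rule_vars b).

Definition unifies {F} (sigma : nat -> term F) (E : list (term F * term F)) : Prop :=
  forall a b, In (a, b) E -> apply_subst sigma a = apply_subst sigma b.

Definition is_mgu {F} (sigma : nat -> term F) (E : list (term F * term F)) : Prop :=
  unifies sigma E /\
  forall tau, unifies tau E ->
    exists delta, forall x, tau x = apply_subst delta (sigma x).

(** Parallel critical pairs between R and R.  The list [steps] pairs each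
    position p ∈ P with the rule variant l_p -> r_p used there. *)
Definition pcp {F} (R : rule F -> Prop) (t u : term F) : Prop :=
  exists (l r : term F) (steps : list (pos * rule F)) (sigma : nat -> term F),
    variant_in R (l, r) /\
    steps <> [] /\
    Forall (fun pr => variant_in R (snd pr) /\ fun_pos l (fst pr)) steps /\
    ForallOrdPairs (fun a b => parallel (fst a) (fst b)) steps /\
    ForallOrdPairs var_disjoint ((l, r) :: map snd steps) /\
    is_mgu sigma (map (fun pr => (fst (snd pr), subt l (fst pr))) steps) /\
    (forall lr', steps = [([], lr')] -> ~ variant lr' (l, r)) /\
    t = fold_left (fun acc pr => replace_at acc (fst pr) (apply_subst sigma (snd (snd pr))))
                  steps (apply_subst sigma l) /\
    u = apply_subst sigma r.

(* Main.v *)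
Require Import Defs.
From Stdlib Require Import List Relations Arith Lia PeanoNat Classical Permutation Bool.
Import ListNotations.
Set Implicit Arguments.


Section Basics.
Variable F : Type.
Notation term := (term F).
Implicit Types R A : rule F -> Prop.

Section TI.
Variable P : term -> Prop.
Hypothesis HV : forall x, P (Var x).
Hypothesis HF : forall f ts, Forall P ts -> P (Fun f ts).
Fixpoint term_ind' (t : term) : P t :=
  match t with
  | Var x => HV x
  | Fun f ts => HF f ((fix go (l : list term) : Forall P l :=
      match l with [] => Forall_nil _ | u :: l' => Forall_cons _ (term_ind' u) (go l') end) ts)
  end.
End TI.

Fixpoint tsize (t : term) : nat :=
  match t with Var _ => 1 | Fun _ ts => S (list_sum (map tsize ts)) end.

Lemma tsize_pos t : 1 <= tsize t.
Proof. destruct t; simpl; lia. Qed.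

Lemma tsize_arg f ts t : In t ts -> tsize t < tsize (Fun f ts).
Proof.
  simpl. induction ts as [|u ts IH]; simpl; intros H; [contradiction|].
  destruct H as [H|H]; subst; try lia. specialize (IH H). lia.
Qed.

Lemma subst_comp (s1 s2 : nat -> term) t :
  apply_subst s2 (apply_subst s1 t) = apply_subst (fun x => apply_subst s2 (s1 x)) t.
Proof.
  induction t using term_ind'; simpl; auto.
  f_equal. rewrite map_map. apply map_ext_in. intros a Ha.
  rewrite Forall_forall in H. auto.
Qed.

Lemma subst_ext (s1 s2 : nat -> term) t :
  (forall x, In x (vars t) -> s1 x = s2 x) -> apply_subst s1 t = apply_subst s2 t.
Proof.
  induction t using term_ind'; simpl; intros Hx; auto.
  f_equal. apply map_ext_in. intros a Ha.
  rewrite Forall_forall in H. apply H; auto.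
  intros x Hx'. apply Hx. apply in_flat_map. eauto.
Qed.

Lemma subst_var t : apply_subst (@Var F) t = t.
Proof.
  induction t using term_ind'; simpl; auto.
  f_equal. rewrite Forall_forall in H. induction ts; simpl; auto.
  f_equal; auto. apply H; simpl; auto. apply IHts; intros; apply H; simpl; auto.
Qed.

Lemma subst_ext_inv (s1 s2 : nat -> term) t :
  apply_subst s1 t = apply_subst s2 t -> forall x, In x (vars t) -> s1 x = s2 x.
Proof.
  induction t using term_ind'; simpl; intros E y Hy.
  - destruct Hy as [<-|[]]; auto.
  - injection E as E. apply in_flat_map in Hy as [a [Ha Hy]].
    rewrite Forall_forall in H. apply (H a Ha); auto.
    clear - E Ha. induction ts; simpl in *; [contradiction|].
    injection E as E1 E2. destruct Ha; subst; auto.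
Qed.

Lemma vars_subst_ren (rho : nat -> nat) t :
  vars (apply_subst (fun x => @Var F (rho x)) t) = map rho (vars t).
Proof.
  induction t using term_ind'; simpl; auto.
  rewrite flat_map_concat_map, map_map, flat_map_concat_map, concat_map, map_map.
  f_equal. apply map_ext_in. intros a Ha. rewrite Forall_forall in H. auto.
Qed.

Lemma in_vars_subst x (s : nat -> term) t :
  In x (vars (apply_subst s t)) -> exists y, In y (vars t) /\ In x (vars (s y)).
Proof.
  induction t using term_ind'; simpl; intros Hx.
  - exists x0. auto.
  - apply in_flat_map in Hx as [a [Ha Hx]]. apply in_map_iff in Ha as [b [<- Hb]].
    rewrite Forall_forall in H. destruct (H b Hb Hx) as [y [Hy1 Hy2]].
    exists y. split; auto. apply in_flat_map. eauto.
Qed.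

Lemma in_funs_subst f (s : nat -> term) t :
  In f (funs (apply_subst s t)) -> In f (funs t) \/ exists y, In y (vars t) /\ In f (funs (s y)).
Proof.
  induction t using term_ind'; simpl; intros Hx.
  - right. exists x. auto.
  - destruct Hx as [Hx|Hx]; [left; left; auto|].
    apply in_flat_map in Hx as [a [Ha Hx]]. apply in_map_iff in Ha as [b [<- Hb]].
    rewrite Forall_forall in H. destruct (H b Hb Hx) as [H1|[y [Hy1 Hy2]]].
    + left. right. apply in_flat_map. eauto.
    + right. exists y. split; auto. apply in_flat_map. eauto.
Qed.

Lemma funs_subst_l f (s : nat -> term) t : In f (funs t) -> In f (funs (apply_subst s t)).
Proof.
  induction t using term_ind'; simpl; intros Hx; try contradiction.
  destruct Hx as [Hx|Hx]; [left; auto|right].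
  apply in_flat_map in Hx as [a [Ha Hx]]. apply in_flat_map.
  exists (apply_subst s a). split. apply in_map; auto.
  rewrite Forall_forall in H. auto.
Qed.

Lemma funs_subst_r f (s : nat -> term) t y :
  In y (vars t) -> In f (funs (s y)) -> In f (funs (apply_subst s t)).
Proof.
  induction t using term_ind'; simpl; intros Hy Hx.
  - destruct Hy as [<-|[]]; auto.
  - right. apply in_flat_map in Hy as [a [Ha Hy]]. apply in_flat_map.
    exists (apply_subst s a). split. apply in_map; auto.
    rewrite Forall_forall in H. eauto.
Qed.

Lemma replace_nil (t u : term) : replace_at t [] u = u.
Proof. destruct t; reflexivity. Qed.

Inductive cstep (R : rule F -> Prop) : term -> term -> Prop :=
| cs_root l r (s : nat -> term) : R (l, r) -> cstep R (apply_subst s l) (apply_subst s r)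
| cs_arg f ts1 t t' ts2 : cstep R t t' -> cstep R (Fun f (ts1 ++ t :: ts2)) (Fun f (ts1 ++ t' :: ts2)).

Lemma nth_split (ts : list term) i u g :
  nth_error ts i = Some u ->
  exists ts1 ts2, ts = ts1 ++ u :: ts2 /\ length ts1 = i /\ Defs.map_nth g i ts = ts1 ++ g u :: ts2.
Proof.
  revert i. induction ts as [|a ts IH]; intros [|i] H; simpl in H; try discriminate.
  - injection H as <-. exists [], ts. auto.
  - destruct (IH i H) as [ts1 [ts2 [E1 [E2 E3]]]]. exists (a :: ts1), ts2.
    simpl. rewrite E3, <- E2, E1. auto.
Qed.

Lemma map_nth_app (ts1 ts2 : list term) u g :
  Defs.map_nth g (length ts1) (ts1 ++ u :: ts2) = ts1 ++ g u :: ts2.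
Proof. induction ts1; simpl; f_equal; auto. Qed.

Lemma nth_error_mid (ts1 ts2 : list term) u : nth_error (ts1 ++ u :: ts2) (length ts1) = Some u.
Proof. induction ts1; simpl; auto. Qed.

Lemma rstep_cstep R s t : rstep R s t <-> cstep R s t.
Proof.
  split.
  - intros [l [r [p [sg [HR [Hs Ht]]]]]]. subst t. revert s Hs.
    induction p as [|i p IH]; intros s Hs; simpl in *.
    + injection Hs as ->. rewrite replace_nil. apply cs_root; auto.
    + destruct s as [x|f ts]; try discriminate.
      destruct (nth_error ts i) as [u|] eqn:E; try discriminate.
      destruct (nth_split _ _ (fun s => replace_at s p (apply_subst sg r)) E) as [ts1 [ts2 [E1 [E2 E3]]]].
      simpl. rewrite E3, E1. constructor. apply IH. auto.
  - induction 1.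
    + exists l, r, [], s. rewrite replace_nil. auto.
    + destruct IHcstep as [l [r [p [sg [HR [Hs Ht]]]]]].
      exists l, r, (length ts1 :: p), sg. split; auto. simpl.
      rewrite nth_error_mid. split; auto. rewrite map_nth_app. congruence.
Qed.

Lemma rsteps_csteps R s t : rsteps R s t <-> clos_refl_trans _ (cstep R) s t.
Proof.
  split; induction 1; try (econstructor; eauto; fail).
  - apply rt_step. apply rstep_cstep; auto.
  - apply rt_step. apply rstep_cstep; auto.
Qed.

Lemma conv_cconv R s t : conv R s t <-> clos_refl_sym_trans _ (cstep R) s t.
Proof.
  split; induction 1; try (econstructor; eauto; fail).
  - apply rst_step. apply rstep_cstep; auto.
  - apply rst_step. apply rstep_cstep; auto.
Qed.

Lemma rsteps_step R s t : cstep R s t -> rsteps R s t.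
Proof. intros; apply rt_step, rstep_cstep; auto. Qed.

Lemma rsteps_trans R s t u : rsteps R s t -> rsteps R t u -> rsteps R s u.
Proof. intros; eapply rt_trans; eauto. Qed.

Lemma rsteps_refl R s : rsteps R s s.
Proof. apply rt_refl. Qed.

Lemma rsteps_conv R s t : rsteps R s t -> conv R s t.
Proof. induction 1; [apply rst_step| apply rst_refl | eapply rst_trans]; eauto. Qed.

Lemma cstep_subst R s t (sg : nat -> term) : cstep R s t -> cstep R (apply_subst sg s) (apply_subst sg t).
Proof.
  induction 1; simpl.
  - rewrite !subst_comp. constructor; auto.
  - rewrite !map_app. simpl. constructor; auto.
Qed.

Lemma rsteps_subst R s t (sg : nat -> term) : rsteps R s t -> rsteps R (apply_subst sg s) (apply_subst sg t).
Proof.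
  rewrite !rsteps_csteps. induction 1; [apply rt_step, cstep_subst; auto|apply rt_refl|eapply rt_trans; eauto].
Qed.

Lemma conv_subst R s t (sg : nat -> term) : conv R s t -> conv R (apply_subst sg s) (apply_subst sg t).
Proof.
  rewrite !conv_cconv. induction 1; [apply rst_step, cstep_subst; auto|apply rst_refl|apply rst_sym; auto|eapply rst_trans; eauto].
Qed.

Lemma rsteps_ctx1 R f ts1 ts2 t t' : rsteps R t t' -> rsteps R (Fun f (ts1 ++ t :: ts2)) (Fun f (ts1 ++ t' :: ts2)).
Proof.
  rewrite !rsteps_csteps. induction 1; [apply rt_step; constructor; auto|apply rt_refl|eapply rt_trans; eauto].
Qed.

Lemma conv_ctx1 R f ts1 ts2 t t' : conv R t t' -> conv R (Fun f (ts1 ++ t :: ts2)) (Fun f (ts1 ++ t' :: ts2)).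
Proof.
  rewrite !conv_cconv. induction 1; [apply rst_step; constructor; auto|apply rst_refl|apply rst_sym; auto|eapply rst_trans; eauto].
Qed.

Lemma rsteps_ctx R f ss ts : Forall2 (rsteps R) ss ts -> rsteps R (Fun f ss) (Fun f ts).
Proof.
  intros H. cut (forall pre, rsteps R (Fun f (pre ++ ss)) (Fun f (pre ++ ts))).
  { intros H'. apply (H' []). }
  induction H; intros pre. apply rt_refl.
  eapply rt_trans. apply rsteps_ctx1. eauto.
  specialize (IHForall2 (pre ++ [y])). rewrite <- !app_assoc in IHForall2. exact IHForall2.
Qed.

Lemma conv_ctx R f ss ts : Forall2 (conv R) ss ts -> conv R (Fun f ss) (Fun f ts).
Proof.
  intros H. cut (forall pre, conv R (Fun f (pre ++ ss)) (Fun f (pre ++ ts))).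
  { intros H'. apply (H' []). }
  induction H; intros pre. apply rst_refl.
  eapply rst_trans. apply conv_ctx1. eauto.
  specialize (IHForall2 (pre ++ [y])). rewrite <- !app_assoc in IHForall2. exact IHForall2.
Qed.

Inductive par (A : rule F -> Prop) : term -> term -> Prop :=
| par_var x : par A (Var x) (Var x)
| par_fun f ss ts : Forall2 (par A) ss ts -> par A (Fun f ss) (Fun f ts)
| par_root l r (s : nat -> term) : A (l, r) -> par A (apply_subst s l) (apply_subst s r).

Lemma par_refl A t : par A t t.
Proof.
  induction t using term_ind'. constructor. constructor.
  induction ts; constructor; inversion H; auto.
Qed.

Lemma par_subst A t (s1 s2 : nat -> term) :
  (forall x, In x (vars t) -> par A (s1 x) (s2 x)) -> par A (apply_subst s1 t) (apply_subst s2 t).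
Proof.
  induction t using term_ind'; simpl; intros Hx; auto.
  constructor. induction ts; simpl; constructor; inversion H; subst.
  - apply H2. intros; apply Hx; simpl; apply in_or_app; auto.
  - apply IHts; auto. intros; apply Hx; simpl; apply in_or_app; auto.
Qed.

Lemma cstep_par A s t : cstep A s t -> par A s t.
Proof.
  induction 1. constructor; auto. constructor. apply Forall2_app.
  - induction ts1; constructor; auto. apply par_refl.
  - constructor; auto. induction ts2; constructor; auto. apply par_refl.
Qed.

Lemma par_rsteps A s t : par A s t -> rsteps A s t.
Proof.
  revert t. induction s using term_ind'; intros t Hp; inversion Hp; subst;
    try (apply rsteps_step; constructor; auto; fail); try apply rt_refl.
  apply rsteps_ctx. clear Hp. match goal with HH : Forall2 _ _ _ |- _ => revert ts0 HH end. induction H; intros us Hus; inversion Hus; subst; constructor; auto.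
Qed.

End Basics.


Section Lists.
Variable F : Type.
Notation term := (term F).

Lemma nodup_app_disj (A : Type) (a b : list A) x : NoDup (a ++ b) -> In x a -> In x b -> False.
Proof.
  induction a; simpl; intros H Ha Hb; [contradiction|].
  inversion H; subst. destruct Ha; subst; eauto.
  apply H2. apply in_or_app; auto.
Qed.

Lemma Forall2_impl_in (A B : Type) (Q Q' : A -> B -> Prop) la lb :
  (forall a b, In a la -> Q a b -> Q' a b) -> Forall2 Q la lb -> Forall2 Q' la lb.
Proof. intros H H2. induction H2; constructor; simpl in *; auto. Qed.

Lemma Forall2_map_r (A B C : Type) (Q : A -> C -> Prop) (g : B -> C) la lb :
  Forall2 Q la (map g lb) <-> Forall2 (fun a b => Q a (g b)) la lb.
Proof.
  split.
  - revert la; induction lb; intros la H; inversion H; subst; constructor; auto.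
  - induction 1; constructor; auto.
Qed.

Lemma Forall2_map_l (A B C : Type) (Q : C -> B -> Prop) (g : A -> C) la lb :
  Forall2 Q (map g la) lb <-> Forall2 (fun a b => Q (g a) b) la lb.
Proof.
  split.
  - revert lb; induction la; intros lb H; inversion H; subst; constructor; auto.
  - induction 1; constructor; auto.
Qed.

Lemma Forall2_eq_map (A B : Type) (g : A -> B) la lb :
  Forall2 (fun a b => b = g a) la lb -> lb = map g la.
Proof. induction 1; simpl; congruence. Qed.

Lemma Forall_Forall2 (A B : Type) (P : A -> Prop) (Q : A -> B -> Prop) la lb :
  Forall P la -> Forall2 Q la lb -> Forall2 (fun a b => P a /\ Q a b) la lb.
Proof. intros H1 H2. induction H2; inversion H1; constructor; auto. Qed.

Lemma Forall2_in_l (A B : Type) (Q : A -> B -> Prop) la lb a :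
  Forall2 Q la lb -> In a la -> exists b, In b lb /\ Q a b.
Proof. induction 1; simpl; intros H'; [contradiction|]. destruct H'; subst; eauto.
  destruct (IHForall2 H1) as [b [? ?]]; eauto. Qed.

Lemma Forall2_in_r (A B : Type) (Q : A -> B -> Prop) la lb b :
  Forall2 Q la lb -> In b lb -> exists a, In a la /\ Q a b.
Proof. induction 1; simpl; intros H'; [contradiction|]. destruct H'; subst; eauto.
  destruct (IHForall2 H1) as [c [? ?]]; eauto. Qed.

Lemma merge2 (B : Type) (P : term -> B -> (nat -> term) -> Prop) ls (bs : list B) (dflt : nat -> term) :
  (forall l b s s', (forall x, In x (vars l) -> s x = s' x) -> P l b s -> P l b s') ->
  NoDup (flat_map vars ls) -> Forall2 (fun l b => exists s, P l b s) ls bs ->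
  exists s, (forall x, ~ In x (flat_map vars ls) -> s x = dflt x) /\ Forall2 (fun l b => P l b s) ls bs.
Proof.
  intros Hinv Hnd H. induction H as [|l b ls bs [s1 H1] H2 IH].
  - exists dflt. split; auto.
  - simpl in Hnd. destruct IH as [s2 [Hd2 H3]]. eapply NoDup_app_remove_l; eauto.
    exists (fun x => if in_dec Nat.eq_dec x (vars l) then s1 x else s2 x). split.
    + intros x Hx. simpl in Hx. destruct (in_dec Nat.eq_dec x (vars l)).
      * exfalso. apply Hx. apply in_or_app; auto.
      * apply Hd2. intro; apply Hx; apply in_or_app; auto.
    + constructor.
      * eapply Hinv; [|exact H1]. intros x Hx. destruct (in_dec Nat.eq_dec x (vars l)); tauto.
      * eapply Forall2_impl_in; [|exact H3]. intros l' b' Hl' HP. eapply Hinv; [|exact HP].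
        intros x Hx. destruct (in_dec Nat.eq_dec x (vars l)); auto.
        exfalso. eapply nodup_app_disj; eauto. apply in_flat_map; eauto.
Qed.

End Lists.

Section D2.
Variable F : Type.
Notation term := (term F).
Variable C : rule F -> Prop.
Hypothesis Clin : forall l r, C (l, r) -> NoDup (vars l).
Hypothesis Cwf : forall l r, C (l, r) -> (forall x, l <> Var x) /\ incl (vars r) (vars l).

Definition capterm (t : term) := forall f, In f (funs t) -> fun_of C f.
Definition alien (t : term) := match t with Var _ => True | Fun h _ => ~ fun_of C h end.
Definition Aa (a t : term) : Prop :=
  (exists y, a = Var y /\ t = Var y) \/
  (exists h ss ts, a = Fun h ss /\ t = Fun h ts /\ ~ fun_of C h /\ Forall2 (rsteps C) ss ts).
Definition joinable (a b : term) := exists v, rsteps C a v /\ rsteps C b v.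

Inductive G (th : nat -> term) : term -> term -> Prop :=
| G_var x t : Aa (th x) t -> G th (Var x) t
| G_fun f cs ts : Forall2 (G th) cs ts -> G th (Fun f cs) (Fun f ts).

Lemma G1 th t (s0 s : nat -> term) :
  (forall x, In x (vars t) -> G th (s0 x) (s x)) -> G th (apply_subst s0 t) (apply_subst s t).
Proof.
  induction t using term_ind'; simpl; intros Hx; auto.
  constructor. apply Forall2_map_l, Forall2_map_r. induction ts; constructor; inversion H; subst.
  - apply H2. intros; apply Hx; simpl; apply in_or_app; auto.
  - apply IHts; auto. intros; apply Hx; simpl; apply in_or_app; auto.
Qed.

Lemma capterm_funs l f : (forall f, In f (funs l) -> fun_of C f) -> In f (funs l) -> fun_of C f.
Proof. auto. Qed.

Lemma G2 th l : NoDup (vars l) -> capterm l -> forall c (s : nat -> term), G th c (apply_subst s l) ->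
  exists s0, c = apply_subst s0 l /\ forall x, In x (vars l) -> G th (s0 x) (s x).
Proof.
  induction l using term_ind'; intros Hnd Hcap c s HG.
  - exists (fun _ => c). simpl. split; auto. intros y [<-|[]]; auto.
  - simpl in HG. inversion HG; subst.
    + exfalso. match goal with HA : Aa _ _ |- _ => destruct HA as [[y [_ E]]|[h [ss [ts0 [E1 [E2 [E3 _]]]]]]]; try discriminate end.
      injection E2 as -> _. apply E3. apply Hcap. simpl; auto.
    + apply Forall2_flip in H2. apply Forall2_map_l in H2.
      assert (Hex : Forall2 (fun l c => exists s0, c = apply_subst s0 l /\ forall x, In x (vars l) -> G th (s0 x) (s x)) ts cs).
      { pose proof (Forall_Forall2 H H2) as H3.
        eapply Forall2_impl_in; [|exact H3]. intros a b Ha [IH HGab]. apply IH; auto.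
        - simpl in Hnd. clear -Hnd Ha. induction ts; simpl in *; [contradiction|].
          destruct Ha; subst. eapply NoDup_app_remove_r; eauto. apply IHts; auto. eapply NoDup_app_remove_l; eauto.
        - intros g Hg. apply Hcap. simpl. right. apply in_flat_map; eauto. }
      destruct (@merge2 F term (fun l c s0 => c = apply_subst s0 l /\ forall x, In x (vars l) -> G th (s0 x) (s x)) ts cs (fun x => Var x) ) as [s0 [_ Hs0]]; auto.
      { intros l b s1 s2 Hag [E HH]. split. rewrite E. apply subst_ext; auto.
        intros x Hx. rewrite <- Hag; auto. }
      exists s0. split.
      * simpl. f_equal. apply Forall2_eq_map. eapply Forall2_impl_in; [|exact Hs0]. intros ? ? _ [E _]; exact E.
      * intros x Hx. simpl in Hx. apply in_flat_map in Hx as [a [Ha Hx]].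
        destruct (Forall2_in_l _ Hs0 Ha) as [b [_ [_ HH]]]. auto.
Qed.

Lemma G3 th l : NoDup (vars l) -> forall t (s0 : nat -> term), G th (apply_subst s0 l) t ->
  exists s, t = apply_subst s l /\ forall x, In x (vars l) -> G th (s0 x) (s x).
Proof.
  induction l using term_ind'; intros Hnd t s0 HG.
  - exists (fun _ => t). simpl. split; auto. intros y [<-|[]]; auto.
  - simpl in HG. inversion HG; subst.
    apply (proj1 (@Forall2_map_l _ _ _ _ (apply_subst s0) ts ts0)) in H3.
    assert (Hex : Forall2 (fun l c => exists s, c = apply_subst s l /\ forall x, In x (vars l) -> G th (s0 x) (s x)) ts ts0).
    { pose proof (Forall_Forall2 H H3) as H4.
      eapply Forall2_impl_in; [|exact H4]. intros a b Ha [IH HGab]. apply IH; auto.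
      simpl in Hnd. clear -Hnd Ha. induction ts; simpl in *; [contradiction|].
      destruct Ha; subst. eapply NoDup_app_remove_r; eauto. apply IHts; auto. eapply NoDup_app_remove_l; eauto. }
    destruct (@merge2 F term (fun l c s => c = apply_subst s l /\ forall x, In x (vars l) -> G th (s0 x) (s x)) ts ts0 (fun x => Var x) ) as [s [_ Hs]]; auto.
    { intros l b s1 s2 Hag [E HH]. split. rewrite E. apply subst_ext; auto.
      intros x Hx. rewrite <- Hag; auto. }
    exists s. split.
    * simpl. f_equal. apply Forall2_eq_map. eapply Forall2_impl_in; [|exact Hs]. intros ? ? _ [E _]; exact E.
    * intros x Hx. simpl in Hx. apply in_flat_map in Hx as [a [Ha Hx]].
      destruct (Forall2_in_l _ Hs Ha) as [b [_ [_ HH]]]. auto.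
Qed.

Lemma C_capterm l r : C (l, r) -> capterm l.
Proof. intros HC f Hf. exists l, r. auto. Qed.

Lemma G4 th t t' : cstep C t t' -> forall c, G th c t -> G th c t' \/ exists c', cstep C c c' /\ G th c' t'.
Proof.
  induction 1 as [l r s HC|f ts1 t0 t0' ts2 Hst IH]; intros c HG.
  - destruct (@G2 th l (Clin HC) (C_capterm HC) c s HG) as [s0 [-> Hs0]].
    right. exists (apply_subst s0 r). split. constructor; auto.
    apply G1. intros x Hx. apply Hs0. apply (proj2 (Cwf HC)); auto.
  - inversion HG; subst.
    + left. constructor.
      destruct H as [[y [_ E]]|[h [ss [ts [E1 [E2 [E3 E4]]]]]]]; try discriminate.
      injection E2 as <- <-. right. exists f, ss, (ts1 ++ t0' :: ts2). repeat split; auto.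
      apply Forall2_app_inv_r in E4 as [l1 [l2 [A1 [A2 ->]]]].
      inversion A2; subst. apply Forall2_app; auto. constructor; auto.
      eapply rsteps_trans; eauto. apply rsteps_step; auto.
    + apply Forall2_app_inv_r in H1 as [l1 [l2 [A1 [A2 ->]]]].
      destruct l2 as [|c0 l2']; inversion A2; subst.
      destruct (IH _ H2) as [H5|[c' [Hc' HGc']]].
      * left. constructor. apply Forall2_app; auto.
      * right. exists (Fun f (l1 ++ c' :: l2')). split. constructor; auto.
        constructor. apply Forall2_app; auto.
Qed.

Lemma G5 th c0 t0 t : G th c0 t0 -> rsteps C t0 t -> exists c, rsteps C c0 c /\ G th c t.
Proof.
  intros HG Hs. apply rsteps_csteps in Hs. apply clos_rt_rtn1_iff in Hs.
  induction Hs as [|y z Hyz Hs IH].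
  - exists c0. split; auto. apply rsteps_refl.
  - destruct IH as [c [Hc HGc]]. destruct (G4 Hyz HGc) as [H|[c' [Hc' HG']]].
    + exists c; auto.
    + exists c'. split; auto. eapply rsteps_trans; eauto. apply rsteps_step; auto.
Qed.

Lemma G6 th c c' : cstep C c c' -> forall t, G th c t -> exists t', cstep C t t' /\ G th c' t'.
Proof.
  induction 1 as [l r s0 HC|f ts1 t0 t0' ts2 Hst IH]; intros t HG.
  - destruct (@G3 th l (Clin HC) t s0 HG) as [s [-> Hs]].
    exists (apply_subst s r). split. constructor; auto.
    apply G1. intros x Hx. apply Hs. apply (proj2 (Cwf HC)); auto.
  - inversion HG; subst.
    match goal with HH : Forall2 _ _ _ |- _ => apply Forall2_app_inv_l in HH as [l1 [l2 [A1 [A2 ->]]]] end.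
    destruct l2 as [|u0 l2']; inversion A2; subst.
    destruct (IH _ H2) as [u' [Hu' HGu']].
    exists (Fun f (l1 ++ u' :: l2')). split. constructor; auto.
    constructor. apply Forall2_app; auto.
Qed.

Lemma G6s th c c' t : rsteps C c c' -> G th c t -> exists t', rsteps C t t' /\ G th c' t'.
Proof.
  intros Hs. revert t. apply rsteps_csteps in Hs. apply clos_rt_rt1n_iff in Hs.
  induction Hs as [|x y z Hxy Hs IH]; intros t HG.
  - exists t. split; auto. apply rsteps_refl.
  - destruct (G6 Hxy HG) as [t1 [H1 HG1]]. destruct (IH _ HG1) as [t2 [H2 HG2]].
    exists t2. split; auto. eapply rsteps_trans; eauto. apply rsteps_step; auto.
Qed.

Lemma join_list (ss as_ bs : list term) :
  Forall2 (fun a b => joinable a b) as_ bs -> exists ws, Forall2 (rsteps C) as_ ws /\ Forall2 (rsteps C) bs ws.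
Proof.
  induction 1. exists []; auto.
  destruct H as [v [H1 H2]]. destruct IHForall2 as [ws [W1 W2]]. exists (v :: ws). split; constructor; auto.
Qed.

Lemma G7 th : (forall x a1 a2, Aa (th x) a1 -> Aa (th x) a2 -> joinable a1 a2) ->
  forall d v1 v2, G th d v1 -> G th d v2 -> joinable v1 v2.
Proof.
  intros HA d. induction d using term_ind'; intros v1 v2 H1 H2.
  - inversion H1; inversion H2; subst. eauto.
  - inversion H1 as [|f1 cs1 vs1 A1]; subst. inversion H2 as [|f2 cs2 vs2 A2]; subst.
    assert (Forall2 (fun a b => joinable a b) vs1 vs2).
    { clear H1 H2. revert vs1 vs2 A1 A2. induction H; intros l1 l2 A1 A2; inversion A1; inversion A2; subst; constructor; eauto. }
    destruct (join_list ts H0) as [ws [W1 W2]]. exists (Fun f ws). split; apply rsteps_ctx; auto.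
Qed.

Lemma ren_G th th' (rho : nat -> nat) c s :
  G th c s -> (forall x, th' (rho x) = th x) -> G th' (apply_subst (fun x => Var (rho x)) c) s.
Proof.
  revert s. induction c using term_ind'; intros s HG Hth; inversion HG; subst; simpl.
  - constructor. rewrite Hth. auto.
  - constructor. apply Forall2_map_l. clear HG. induction H3; inversion H; subst; constructor; auto.
Qed.

Lemma capterm_ren (rho : nat -> nat) c : capterm c -> capterm (apply_subst (fun x => @Var F (rho x)) c).
Proof.
  intros H f Hf. apply in_funs_subst in Hf as [Hf|[y [_ Hf]]]; auto. simpl in Hf. contradiction.
Qed.

Lemma G9 s : exists c th, G th c s /\ capterm c /\ forall x, alien (th x) /\ tsize (th x) <= tsize s.
Proof.
  induction s using term_ind'.
  - exists (Var 0), (fun _ => Var x). repeat split; simpl; auto.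
    + constructor. left. eauto.
    + intros f [].
  - destruct (classic (fun_of C f)) as [Hf|Hf].
    + assert (Hl : forall B, 1 <= B -> (forall s, In s ts -> tsize s <= B) ->
        exists cs th, Forall2 (G th) cs ts /\ Forall capterm cs /\ forall x, alien (th x) /\ tsize (th x) <= B).
      { clear Hf. induction H as [|s0 ss' [c0 [th0 [HG0 [Hc0 Ht0]]]] Hr IH]; intros B HB HS.
        - exists [], (fun x => Var x). repeat split; simpl; auto.
        - destruct (IH B HB) as [cs [th' [HG' [Hc' Ht']]]]. { intros; apply HS; simpl; auto. }
          exists (apply_subst (fun x => Var (2 * x)) c0 :: map (apply_subst (fun x => Var (2 * x + 1))) cs).
          exists (fun y => if Nat.even y then th0 (Nat.div2 y) else th' (Nat.div2 y)).
          repeat split.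
          + constructor. eapply ren_G; eauto. intros x. cbv beta. rewrite Nat.even_even, Nat.div2_double. auto.
            apply Forall2_map_l. eapply Forall2_impl_in; [|exact HG']. intros a b _ Hab.
            eapply ren_G; eauto. intros x. cbv beta. rewrite Nat.even_odd, Nat.div2_odd'. auto.
          + constructor. apply capterm_ren; auto. apply Forall_map. eapply Forall_impl; [|exact Hc'].
            intros; apply capterm_ren; auto.
          + destruct (Nat.even x); [apply Ht0|apply Ht'].
          + destruct (Nat.even x); [|apply Ht'].
            pose proof (proj2 (Ht0 (Nat.div2 x))). pose proof (HS s0 (or_introl eq_refl)). lia. }
      destruct (Hl (tsize (Fun f ts))) as [cs [th [HG [Hc Ht]]]].
      { apply tsize_pos. }
      { intros s Hs. apply Nat.lt_le_incl. apply tsize_arg; auto. }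
      exists (Fun f cs), th. repeat split; auto.
      * constructor; auto.
      * intros g [<-|Hg]; auto. apply in_flat_map in Hg as [c [Hc1 Hc2]].
        rewrite Forall_forall in Hc. eapply Hc; eauto.
      * apply Ht.
      * apply Ht.
    + exists (Var 0), (fun _ => Fun f ts). repeat split; auto.
      * constructor. right. exists f, ts, ts. repeat split; auto.
        clear. induction ts; constructor; auto. apply rsteps_refl.
      * intros g [].
Qed.

Lemma capC t t' : cstep C t t' -> capterm t -> capterm t'.
Proof.
  induction 1 as [l r s HC|f ts1 t0 t0' ts2 Hst IH]; intros Hc g Hg.
  - apply in_funs_subst in Hg as [Hg|[y [Hy Hg]]].
    + exists l, r. auto.
    + apply Hc. apply funs_subst_r with y; auto. apply (proj2 (Cwf HC)); auto.
  - simpl in Hg. destruct Hg as [<-|Hg]. apply Hc. simpl; auto.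
    rewrite flat_map_app in Hg. simpl in Hg. apply in_app_or in Hg as [Hg|Hg].
    + apply Hc. simpl. right. rewrite flat_map_app. apply in_or_app; auto.
    + apply in_app_or in Hg as [Hg|Hg].
      * apply IH; auto. intros g' Hg'. apply Hc. simpl. right. rewrite flat_map_app. simpl.
        apply in_or_app; right; apply in_or_app; auto.
      * apply Hc. simpl. right. rewrite flat_map_app. simpl. apply in_or_app; right; apply in_or_app; auto.
Qed.

Lemma capCs t t' : rsteps C t t' -> capterm t -> capterm t'.
Proof.
  intros Hs. apply rsteps_csteps in Hs. induction Hs; eauto using capC.
Qed.

Variable R : rule F -> Prop.
Hypothesis CR : forall lr, C lr -> R lr.
Hypothesis Rwf : forall l r, R (l, r) -> incl (vars r) (vars l).
Hypothesis Rres : forall l r, restrict R C (l, r) -> rsteps C l r.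

Lemma capR t t' : cstep R t t' -> capterm t -> rsteps C t t'.
Proof.
  induction 1 as [l r s HR|f ts1 t0 t0' ts2 Hst IH]; intros Hc.
  - apply rsteps_subst. apply Rres. split; auto. intros g Hg. apply Hc. simpl. apply funs_subst_l; auto.
  - apply rsteps_ctx1. apply IH. intros g Hg. apply Hc. simpl. right. rewrite flat_map_app. simpl.
    apply in_or_app; right; apply in_or_app; auto.
Qed.

Lemma capRs t t' : rsteps R t t' -> capterm t -> rsteps C t t'.
Proof.
  intros Hs. apply rsteps_csteps in Hs. apply clos_rt_rt1n_iff in Hs.
  induction Hs as [|x y z Hxy Hs IH]; intros Hc. apply rsteps_refl.
  pose proof (capR Hxy Hc) as H1. eapply rsteps_trans; eauto. apply IH. eapply capCs; eauto.
Qed.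

Lemma rsteps_mono (A B : rule F -> Prop) s t : (forall lr, A lr -> B lr) -> rsteps A s t -> rsteps B s t.
Proof.
  intros HAB Hs. apply rsteps_csteps in Hs. apply rsteps_csteps. induction Hs; eauto using rt_trans, rt_refl.
  apply rt_step. induction H; constructor; auto.
Qed.

Theorem D2 : confluent R -> confluent C.
Proof.
  intros HR.
  assert (Main : forall n s, tsize s <= n -> forall t1 t2, rsteps C s t1 -> rsteps C s t2 -> joinable t1 t2).
  { induction n as [|n IHn]; intros s Hsz t1 t2 H1 H2.
    - pose proof (tsize_pos s). lia.
    - destruct (G9 s) as [c [th [HG [Hc Hth]]]].
      destruct (G5 HG H1) as [c1 [Hc1 HG1]]. destruct (G5 HG H2) as [c2 [Hc2 HG2]].
      destruct (HR c c1 c2) as [d [Hd1 Hd2]]; try (eapply rsteps_mono; eauto).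
      apply capRs in Hd1; [|eapply capCs; eauto]. apply capRs in Hd2; [|eapply capCs; eauto].
      destruct (G6s Hd1 HG1) as [v1 [Hv1 HGv1]]. destruct (G6s Hd2 HG2) as [v2 [Hv2 HGv2]].
      assert (J : joinable v1 v2).
      { apply G7 with th d; auto. intros x a1 a2 A1 A2.
        destruct A1 as [[y [E1 E2]]|[h [ss [ts1 [E1 [E2 [E3 E4]]]]]]].
        - destruct A2 as [[y' [E1' E2']]|[h [ss [ts2 [E1' _]]]]]; rewrite E1 in E1'; try discriminate.
          injection E1' as <-. subst. exists (Var y). split; apply rsteps_refl.
        - destruct A2 as [[y' [E1' E2']]|[h' [ss' [ts2 [E1' [E2' [_ E4']]]]]]]; rewrite E1 in E1'; try discriminate.
          injection E1' as <- <-. subst.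
          assert (Hsm : forall s', In s' ss -> tsize s' <= n).
          { intros s' Hs'. pose proof (@tsize_arg F h ss s' Hs'). pose proof (proj2 (Hth x)). rewrite E1 in H0. lia. }
          assert (Forall2 (fun a b => joinable a b) ts1 ts2).
          { clear -E4 E4' Hsm IHn. revert ts1 ts2 E4 E4'. induction ss as [|s0 ss IH]; intros l1 l2 A1 A2;
              inversion A1; inversion A2; subst; constructor.
            - eapply IHn; eauto. apply Hsm; simpl; auto.
            - apply IH; auto. intros; apply Hsm; simpl; auto. }
          destruct (join_list ss H) as [ws [W1 W2]]. exists (Fun h ws). split; apply rsteps_ctx; auto. }
      destruct J as [w [Jw1 Jw2]]. exists w. split; eapply rsteps_trans; eauto. }
  intros s t1 t2 H1 H2. eapply Main; eauto.
Qed.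

End D2.


Section Dec.
Variable F : Type.
Notation term := (term F).
Implicit Types A : rule F -> Prop.

Definition stp := (pos * rule F * (nat -> term))%type.
Definition spos (st : stp) : pos := fst (fst st).
Definition srule (st : stp) : rule F := snd (fst st).
Definition sth (st : stp) : nat -> term := snd st.
Definition sval (st : stp) : term := apply_subst (sth st) (snd (srule st)).
Definition repl (t : term) (Ps : list stp) : term :=
  fold_left (fun acc st => replace_at acc (spos st) (sval st)) Ps t.

Definition DecC A (l : term) (s : nat -> term) (u : term) (Ps : list stp) (s2 : nat -> term) : Prop :=
  (forall x, In x (vars l) -> par A (s x) (s2 x)) /\
  Forall (fun st => A (srule st) /\ fun_pos l (spos st) /\
     apply_subst (sth st) (fst (srule st)) = apply_subst s (subt l (spos st)) /\
     (forall x, In x (vars (subt l (spos st))) -> s2 x = s x)) Ps /\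
  ForallOrdPairs (fun a b => parallel (spos a) (spos b)) Ps /\
  (exists rest, Permutation (vars l) (flat_map (fun st => vars (subt l (spos st))) Ps ++ rest)) /\
  u = repl (apply_subst s2 l) Ps.

Lemma subt_Some (t s : term) p : subterm_at t p = Some s -> subt t p = s.
Proof. unfold subt. intros ->. auto. Qed.

Lemma subterm_vars p : forall (t s : term), subterm_at t p = Some s -> incl (vars s) (vars t).
Proof.
  induction p as [|i p IH]; simpl; intros t s H.
  - injection H as <-. apply incl_refl.
  - destruct t as [x|f ts]; try discriminate.
    destruct (nth_error ts i) as [u|] eqn:E; try discriminate.
    intros x Hx. simpl. apply in_flat_map. exists u. split.
    eapply nth_error_In; eauto. eapply IH; eauto.
Qed.

Lemma subterm_vars_in p (t s : term) x : subterm_at t p = Some s -> In x (vars s) -> In x (vars t).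
Proof. intros H Hx. exact (subterm_vars p t H x Hx). Qed.

Lemma subterm_subst p : forall (t s : term) (sg : nat -> term), subterm_at t p = Some s ->
  subterm_at (apply_subst sg t) p = Some (apply_subst sg s).
Proof.
  induction p as [|i p IH]; simpl; intros t s sg H.
  - injection H as <-. auto.
  - destruct t as [x|f ts]; try discriminate. simpl.
    destruct (nth_error ts i) as [u|] eqn:E; try discriminate.
    rewrite nth_error_map, E. simpl. auto.
Qed.

Lemma prefix_cons i j p q : prefix (i :: p) (j :: q) -> i = j /\ prefix p q.
Proof. intros [r E]. simpl in E. injection E as -> ->. split; auto. exists r; auto. Qed.

Lemma parallel_same i p q : parallel p q -> parallel (i :: p) (i :: q).
Proof. intros [H1 H2]. split; intros H; apply prefix_cons in H; tauto. Qed.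

Lemma parallel_diff i j p q : i <> j -> parallel (i :: p) (j :: q).
Proof. intros Hij. split; intros H; apply prefix_cons in H; destruct H; auto. Qed.

Lemma parallel_S i j p q : parallel (i :: p) (j :: q) -> parallel (S i :: p) (S j :: q).
Proof.
  intros [H1 H2]. split; intros H; apply prefix_cons in H as [E [r Er]]; injection E as ->;
  [apply H1|apply H2]; exists r; simpl; congruence.
Qed.

Lemma FOP_app (X : Type) (Rl : X -> X -> Prop) l1 l2 :
  ForallOrdPairs Rl l1 -> ForallOrdPairs Rl l2 -> (forall a b, In a l1 -> In b l2 -> Rl a b) ->
  ForallOrdPairs Rl (l1 ++ l2).
Proof.
  induction 1; simpl; intros H2 H3; auto.
  constructor. apply Forall_app; split; auto. rewrite Forall_forall; intros; apply H3; simpl; auto.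
  apply IHForallOrdPairs; auto.
Qed.

Lemma FOP_map_in (X Y : Type) (Rl : X -> X -> Prop) (Rl' : Y -> Y -> Prop) (g : X -> Y) l :
  ForallOrdPairs Rl l -> (forall a b, In a l -> In b l -> Rl a b -> Rl' (g a) (g b)) ->
  ForallOrdPairs Rl' (map g l).
Proof.
  induction 1; simpl; intros Hg; constructor.
  - apply Forall_map. rewrite Forall_forall in *. intros b Hb. apply Hg; simpl; auto.
  - apply IHForallOrdPairs. intros; apply Hg; simpl; auto.
Qed.

Lemma repl_app t P1 P2 : repl t (P1 ++ P2) = repl (repl t P1) P2.
Proof. unfold repl. apply fold_left_app. Qed.

Definition shift0 (st : stp) : stp := ((0 :: spos st, srule st), sth st).
Definition shiftS (st : stp) : stp :=
  match spos st with [] => st | i :: p => ((S i :: p, srule st), sth st) end.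

Lemma srule_shiftS st : srule (shiftS st) = srule st.
Proof. destruct st as [[[|i p] rl] th]; reflexivity. Qed.
Lemma sth_shiftS st : sth (shiftS st) = sth st.
Proof. destruct st as [[[|i p] rl] th]; reflexivity. Qed.

Lemma RS0 f Ps : forall (a : term) as_, repl (Fun f (a :: as_)) (map shift0 Ps) = Fun f (repl a Ps :: as_).
Proof.
  induction Ps as [|st Ps IH]; intros a as_; simpl; auto.
Qed.

Lemma RSS f Ps : Forall (fun st => spos st <> []) Ps -> forall as_ (b : term),
  exists cs, repl (Fun f as_) Ps = Fun f cs /\ repl (Fun f (b :: as_)) (map shiftS Ps) = Fun f (b :: cs).
Proof.
  induction 1 as [|st Ps Hst HPs IH]; intros as_ b; simpl.
  - exists as_. auto.
  - destruct st as [[p0 rl] th]. unfold spos in Hst; simpl in Hst. destruct p0 as [|i p]; [congruence|].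
    destruct (IH (Defs.map_nth (fun s => replace_at s p (sval ((i :: p, rl), th))) i as_) b) as [cs [E1 E2]].
    exists cs. split; [exact E1|exact E2].
Qed.

Lemma flat_map_map_ext (X Y Z : Type) (g : Y -> list Z) (h : X -> Y) (g' : X -> list Z) l :
  Forall (fun a => g (h a) = g' a) l -> flat_map g (map h l) = flat_map g' l.
Proof. induction 1; simpl; auto. congruence. Qed.

Lemma vars_nodup_arg (ls : list term) l : NoDup (flat_map vars ls) -> In l ls -> NoDup (vars l).
Proof.
  induction ls; simpl; intros H Hl; [contradiction|]. destruct Hl; subst.
  eapply NoDup_app_remove_r; eauto. apply IHls; auto. eapply NoDup_app_remove_l; eauto.
Qed.

Lemma DecList A f (s : nat -> term) ls us :
  Forall2 (fun l u => NoDup (vars l) -> exists Ps s2, DecC A l s u Ps s2) ls us ->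
  NoDup (flat_map vars ls) ->
  exists Ps s2, DecC A (Fun f ls) s (Fun f us) Ps s2 /\ Forall (fun st => spos st <> []) Ps.
Proof.
  induction 1 as [|l0 u0 ls us H0 HR IH]; intros Hnd.
  - exists [], s. split; [|constructor]. unfold DecC.
    split; [intros x []|]. split; [constructor|]. split; [constructor|].
    split; [exists []; simpl; constructor|]. reflexivity.
  - simpl in Hnd. destruct (H0 ltac:(eapply NoDup_app_remove_r; eauto)) as [Ps0 [s0 [D1 [D2 [D3 [[r0 D4] D5]]]]]].
    destruct (IH ltac:(eapply NoDup_app_remove_l; eauto)) as [PsR [sR [[E1 [E2 [E3 [[rR E4] E5]]]] NE]]].
    set (s2 := fun x => if in_dec Nat.eq_dec x (vars l0) then s0 x else sR x).
    assert (Hs2a : forall x, In x (vars l0) -> s2 x = s0 x).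
    { intros x Hx. unfold s2. destruct (in_dec Nat.eq_dec x (vars l0)); tauto. }
    assert (Hs2b : forall x, In x (flat_map vars ls) -> s2 x = sR x).
    { intros x Hx. unfold s2. destruct (in_dec Nat.eq_dec x (vars l0)); auto.
      exfalso. eapply nodup_app_disj; eauto. }
    set (L := Fun f (l0 :: ls)).
    assert (V0 : forall st, In st Ps0 -> subt L (spos (shift0 st)) = subt l0 (spos st) /\ fun_pos L (spos (shift0 st))).
    { intros st Hst. rewrite Forall_forall in D2. destruct (D2 st Hst) as [_ [[g [gs Hg]] _]].
      assert (HH : subterm_at L (spos (shift0 st)) = Some (Fun g gs)) by (unfold L, shift0, spos in *; simpl; exact Hg).
      split. unfold subt; rewrite HH, Hg; auto. exists g, gs; exact HH. }
    assert (VR : forall st, In st PsR -> subt L (spos (shiftS st)) = subt (Fun f ls) (spos st) /\ fun_pos L (spos (shiftS st))).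
    { intros st Hst. rewrite Forall_forall in E2, NE. destruct (E2 st Hst) as [_ [[g [gs Hg]] _]].
      specialize (NE st Hst).
      assert (HH : subterm_at L (spos (shiftS st)) = subterm_at (Fun f ls) (spos st)).
      { destruct st as [[[|i p] rl] th]; [exfalso; apply NE; reflexivity|reflexivity]. }
      split. unfold subt; rewrite HH, Hg; auto. red. exists g. exists gs. rewrite HH. exact Hg. }
    exists (map shift0 Ps0 ++ map shiftS PsR), s2. split; [split; [|split; [|split; [|split]]]|].
    + intros x Hx. simpl in Hx. apply in_app_or in Hx as [Hx|Hx].
      * rewrite Hs2a; auto.
      * rewrite Hs2b; auto.
    + apply Forall_app. split; apply Forall_map; rewrite Forall_forall in *; intros st Hst.
      * destruct (V0 st Hst) as [V1 V2]. rewrite V1. destruct (D2 st Hst) as [Q1 [_ [Q3 Q4]]].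
        repeat split; auto. intros x Hx. rewrite Hs2a; auto.
        destruct (D2 st Hst) as [_ [[g [gs Hg]] _]]. unfold subt in Hx. rewrite Hg in Hx.
        eapply subterm_vars_in; eauto.
      * destruct (VR st Hst) as [V1 V2]. rewrite V1, srule_shiftS, sth_shiftS.
        destruct (E2 st Hst) as [Q1 [[g [gs Hg]] [Q3 Q4]]].
        repeat split; auto. intros x Hx. rewrite Hs2b; auto.
        unfold subt in Hx. rewrite Hg in Hx. change (In x (vars (Fun f ls))). eapply subterm_vars_in; eauto.
    + apply FOP_app.
      * eapply FOP_map_in; eauto. intros a b _ _ H. apply parallel_same; auto.
      * eapply FOP_map_in; eauto. intros a b Ha Hb H. rewrite Forall_forall in NE.
        pose proof (NE a Ha) as NEa. pose proof (NE b Hb) as NEb. clear -NEa NEb H.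
        destruct a as [[[|i p] ra] ta]; [exfalso; apply NEa; reflexivity|].
        destruct b as [[[|j q] rb] tb]; [exfalso; apply NEb; reflexivity|].
        apply parallel_S. exact H.
      * intros a b Ha Hb. apply in_map_iff in Ha as [a' [<- Ha]]. apply in_map_iff in Hb as [b' [<- Hb]].
        rewrite Forall_forall in NE. specialize (NE b' Hb). clear -NE.
        destruct b' as [[[|j q] rb] tb]; [exfalso; apply NE; reflexivity|].
        apply parallel_diff. auto.
    + exists (r0 ++ rR). rewrite flat_map_app.
      rewrite (@flat_map_map_ext _ _ _ (fun st => vars (subt L (spos st))) shift0 (fun st => vars (subt l0 (spos st)))).
      2:{ rewrite Forall_forall. intros st Hst. rewrite (proj1 (V0 st Hst)). auto. }
      rewrite (@flat_map_map_ext _ _ _ (fun st => vars (subt L (spos st))) shiftS (fun st => vars (subt (Fun f ls) (spos st)))).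
      2:{ rewrite Forall_forall. intros st Hst. rewrite (proj1 (VR st Hst)). auto. }
      unfold L. simpl. simpl in E4.
      eapply perm_trans. apply Permutation_app; [exact D4|exact E4].
      rewrite <- !app_assoc. apply Permutation_app_head.
      rewrite !app_assoc. apply Permutation_app_tail. apply Permutation_app_comm.
    + rewrite repl_app. unfold L. simpl apply_subst. rewrite RS0.
      destruct (RSS f NE (map (apply_subst s2) ls) (repl (apply_subst s2 l0) Ps0)) as [cs [C1 C2]].
      rewrite C2. f_equal. f_equal.
      * rewrite D5. f_equal. apply subst_ext. intros; symmetry; auto.
      * assert (Fun f us = Fun f cs). { rewrite E5, <- C1. f_equal. simpl. f_equal. apply map_ext_in.
          intros a Ha. apply subst_ext. intros x Hx. symmetry. apply Hs2b. apply in_flat_map; eauto. }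
        congruence.
    + apply Forall_app. split; apply Forall_map; rewrite Forall_forall; intros st Hst.
      * unfold shift0, spos. simpl. congruence.
      * rewrite Forall_forall in NE. specialize (NE st Hst). unfold shiftS. destruct (spos st); [congruence|].
        unfold spos. simpl. congruence.
Qed.

Lemma Dec A l : NoDup (vars l) -> forall (s : nat -> term) u, par A (apply_subst s l) u ->
  exists Ps s2, DecC A l s u Ps s2.
Proof.
  induction l as [x|f ls IH] using term_ind'; intros Hnd s u Hp.
  - exists [], (fun y => if Nat.eq_dec y x then u else s y).
    unfold DecC. split; [|split; [constructor|split; [constructor|split]]].
    + intros y Hy; simpl in Hy; destruct Hy as [E|[]]; subst y. simpl.
      destruct (Nat.eq_dec x x); [auto|congruence].
    + exists [x]. simpl. apply Permutation_refl.
    + unfold repl. simpl. destruct (Nat.eq_dec x x); congruence.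
  - simpl in Hp. inversion Hp as [|f' ss us HF E1 E2|lp rp th HA E1 E2]; subst.
    + apply (proj1 (@Forall2_map_l _ _ _ _ (apply_subst s) ls us)) in HF.
      destruct (@DecList A f s ls us) as [Ps [s2 [D _]]]; auto.
      pose proof (Forall_Forall2 IH HF) as H3. eapply Forall2_impl_in; [|exact H3].
      intros a b Ha [IHa Hab] Hnda. apply IHa; auto.
      eauto.
    + exists [(([], (lp, rp)), th)], s. unfold DecC. split; [intros; apply par_refl|]. split.
      { constructor; [|constructor]. unfold srule, spos, sth, subt; simpl. split; [exact HA|].
        split; [exists f, ls; reflexivity|]. split; [simpl; congruence|]. intros; reflexivity. }
      split. { constructor; constructor. }
      split. { exists []. unfold subt, spos. simpl. rewrite !app_nil_r. apply Permutation_refl. }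
      unfold repl, spos, sval, sth, srule. simpl. try rewrite replace_nil; reflexivity.
Qed.

End Dec.
Arguments spos {F} st.
Arguments srule {F} st.
Arguments sth {F} st.
Arguments sval {F} st.
Arguments repl {F} t Ps.
Arguments DecC {F} A l s u Ps s2.


Section Mgu.
Variable F : Type.
Notation term := (term F).

Fixpoint unif (a b : term) : list (nat * term) :=
  match a with
  | Var x => [(x, b)]
  | Fun f as_ =>
    match b with
    | Var y => [(y, a)]
    | Fun g bs =>
      (fix go (xs ys : list term) : list (nat * term) :=
         match xs, ys with
         | x :: xs', y :: ys' => unif x y ++ go xs' ys'
         | _, _ => []
         end) as_ bs
    end
  end.

Lemma unif_fun f g as_ bs :
  unif (Fun f as_) (Fun g bs) = concat (map (fun p => unif (fst p) (snd p)) (combine as_ bs)).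
Proof.
  simpl. revert bs. induction as_ as [|a as_ IH]; intros [|b bs]; simpl; auto. f_equal. apply IH.
Qed.

Definition keys (L : list (nat * term)) := map fst L.
Definition vals (L : list (nat * term)) := flat_map (fun kv => vars (snd kv)) L.

Lemma nodup_app_iff (X : Type) (a b : list X) :
  NoDup (a ++ b) <-> NoDup a /\ NoDup b /\ (forall x, In x a -> ~ In x b).
Proof.
  split.
  - intros H. split; [eapply NoDup_app_remove_r; eauto|]. split; [eapply NoDup_app_remove_l; eauto|].
    intros x H1 H2. eapply nodup_app_disj; eauto.
  - intros [H1 [H2 H3]]. apply NoDup_app; auto.
Qed.

Lemma nodup_sub (X : Type) (a b a' b' : list X) :
  NoDup (a ++ b) -> NoDup a' -> NoDup b' -> incl a' a -> incl b' b -> NoDup (a' ++ b').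
Proof.
  rewrite !nodup_app_iff. intros [_ [_ H]] H1 H2 I1 I2. repeat split; auto.
  intros x Ha Hb. apply (H x); auto.
Qed.

Lemma U1 (tau : nat -> term) a : forall b, apply_subst tau a = apply_subst tau b ->
  forall x t, In (x, t) (unif a b) -> tau x = apply_subst tau t.
Proof.
  induction a as [y|f as_ IH] using term_ind'; intros b E x t Hin.
  - simpl in Hin. destruct Hin as [Hin|[]]. injection Hin as -> ->. auto.
  - destruct b as [y|g bs].
    + simpl in Hin. destruct Hin as [Hin|[]]. injection Hin as -> <-. auto.
    + rewrite unif_fun in Hin. simpl in E. injection E as -> E.
      revert bs E Hin. induction IH as [|a as_ Ha Has IH2]; intros [|b bs] E Hin; simpl in *; try contradiction.
      injection E as E1 E2. apply in_app_or in Hin as [Hin|Hin]; eauto.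
Qed.

Lemma U2 a : forall b, NoDup (vars a ++ vars b) ->
  NoDup (keys (unif a b) ++ vals (unif a b)) /\ incl (keys (unif a b) ++ vals (unif a b)) (vars a ++ vars b).
Proof.
  induction a as [y|f as_ IH] using term_ind'; intros b Hnd.
  - unfold keys, vals. simpl. rewrite app_nil_r. split; auto. apply incl_refl.
  - destruct b as [y|g bs].
    + unfold keys, vals. simpl. rewrite app_nil_r. split.
      * apply Permutation_NoDup with (flat_map vars as_ ++ [y]); auto. apply Permutation_sym, Permutation_cons_append.
      * intros z [<-|Hz]; apply in_or_app; simpl; auto.
    + rewrite unif_fun. simpl vars in *.
      revert bs Hnd. induction IH as [|a as_ Ha Has IH2]; intros [|b bs] Hnd; simpl in *.
      * split; [constructor|intros z []].
      * split; [constructor|intros z []].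
      * split; [constructor|intros z []].
      * assert (P : Permutation ((vars a ++ flat_map vars as_) ++ vars b ++ flat_map vars bs)
                                 ((vars a ++ vars b) ++ (flat_map vars as_ ++ flat_map vars bs))).
        { rewrite <- !app_assoc. apply Permutation_app_head. rewrite !app_assoc. apply Permutation_app_tail.
          apply Permutation_app_comm. }
        pose proof (Permutation_NoDup P Hnd) as Hnd'.
        assert (N1 : NoDup (vars a ++ vars b)) by (eapply NoDup_app_remove_r; eauto).
        assert (N2 : NoDup (flat_map vars as_ ++ flat_map vars bs)) by (eapply NoDup_app_remove_l; eauto).
        destruct (Ha b N1) as [K1 I1]. destruct (IH2 bs N2) as [K2 I2].
        set (L1 := unif a b) in *. set (L2 := concat (map (fun p => unif (fst p) (snd p)) (combine as_ bs))) in *.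
        assert (Q : Permutation (keys (L1 ++ L2) ++ vals (L1 ++ L2)) ((keys L1 ++ vals L1) ++ (keys L2 ++ vals L2))).
        { unfold keys, vals. rewrite map_app, flat_map_app. rewrite <- !app_assoc. apply Permutation_app_head.
          rewrite !app_assoc. apply Permutation_app_tail. apply Permutation_app_comm. }
        split.
        -- eapply Permutation_NoDup. apply Permutation_sym, Q. eapply nodup_sub; [exact Hnd'|exact K1|exact K2|exact I1|exact I2].
        -- intros z Hz. apply (Permutation_in _ Q) in Hz. apply (Permutation_in _ (Permutation_sym P)).
           apply in_app_or in Hz as [Hz|Hz]; apply in_or_app; auto.
Qed.

Lemma subst_id_vars (mu : nat -> term) t : (forall y, In y (vars t) -> mu y = Var y) -> apply_subst mu t = t.
Proof. intros H. rewrite (@subst_ext F mu (@Var F) t); [apply subst_var|auto]. Qed.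

Lemma U3 a : forall b, (exists tau : nat -> term, apply_subst tau a = apply_subst tau b) ->
  forall mu : nat -> term, (forall x t, In (x, t) (unif a b) -> mu x = t) ->
  (forall x t, In (x, t) (unif a b) -> forall y, In y (vars t) -> mu y = Var y) ->
  apply_subst mu a = apply_subst mu b.
Proof.
  induction a as [y|f as_ IH] using term_ind'; intros b [tau E] mu H1 H2.
  - simpl. rewrite (H1 y b) by (simpl; auto). symmetry. apply subst_id_vars. intros; eapply H2; simpl; eauto.
  - destruct b as [y|g bs].
    + simpl apply_subst at 2. rewrite (H1 y (Fun f as_)) by (simpl; auto). apply subst_id_vars.
      intros; eapply H2; simpl; eauto.
    + simpl in E. injection E as <- E. simpl. f_equal.
      rewrite unif_fun in H1, H2.
      revert bs E H1 H2. induction IH as [|a as_ Ha Has IH2]; intros [|b bs] E H1 H2; simpl in *; try discriminate; auto.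
      injection E as E1 E2. f_equal.
      * apply Ha.
        -- exists tau; exact E1.
        -- intros x t Hxt. apply H1. apply in_or_app; left; exact Hxt.
        -- intros x t Hxt y Hy. eapply H2; [apply in_or_app; left; exact Hxt|exact Hy].
      * apply IH2; auto.
        -- intros x t Hxt. apply H1. apply in_or_app; right; exact Hxt.
        -- intros x t Hxt y Hy. eapply H2; [apply in_or_app; right; exact Hxt|exact Hy].
Qed.

Definition ubinds (E : list (term * term)) := flat_map (fun e => unif (fst e) (snd e)) E.
Definition mgu_of (E : list (term * term)) : nat -> term :=
  fun x => match find (fun kv => Nat.eqb (fst kv) x) (ubinds E) with Some kv => snd kv | None => Var x end.

Lemma find_key (B : list (nat * term)) x t : NoDup (map fst B) -> In (x, t) B ->
  find (fun kv => Nat.eqb (fst kv) x) B = Some (x, t).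
Proof.
  induction B as [|[y u] B IH]; simpl; intros Hnd Hin; [contradiction|].
  inversion Hnd; subst. destruct Hin as [Hin|Hin].
  - injection Hin as -> ->. rewrite Nat.eqb_refl. auto.
  - destruct (Nat.eqb_spec y x); subst; auto.
    exfalso. apply H1. apply in_map_iff. exists (x, t). auto.
Qed.

Lemma find_none (B : list (nat * term)) x : ~ In x (map fst B) ->
  find (fun kv => Nat.eqb (fst kv) x) B = None.
Proof.
  induction B as [|[y u] B IH]; simpl; intros Hn; auto.
  destruct (Nat.eqb_spec y x); subst. exfalso; auto. apply IH. auto.
Qed.

Lemma flat_map_app_perm (X Y : Type) (g1 g2 : X -> list Y) l :
  Permutation (flat_map (fun e => g1 e ++ g2 e) l) (flat_map g1 l ++ flat_map g2 l).
Proof.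
  induction l; simpl; auto.
  rewrite <- !app_assoc. apply Permutation_app_head.
  eapply perm_trans. apply Permutation_app_head. exact IHl.
  rewrite !app_assoc. apply Permutation_app_tail. apply Permutation_app_comm.
Qed.

Lemma nodup_flat_map_sub (X Y : Type) (g h : X -> list Y) l :
  NoDup (flat_map g l) -> (forall e, NoDup (g e) -> NoDup (h e) /\ incl (h e) (g e)) -> NoDup (flat_map h l).
Proof.
  induction l as [|e l IH]; simpl; intros Hnd Hgh; [constructor|].
  apply nodup_app_iff in Hnd as [N1 [N2 N3]]. destruct (Hgh e N1) as [M1 M2].
  apply nodup_app_iff. repeat split; auto. intros x Hx Hx2. apply (N3 x); auto.
  apply in_flat_map in Hx2 as [e' [He' Hx2]]. apply in_flat_map. exists e'. split; auto.
  assert (NoDup (g e')). { clear -N2 He'. induction l; simpl in *; [contradiction|].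
    destruct He'; subst. eapply NoDup_app_remove_r; eauto. apply IHl; auto. eapply NoDup_app_remove_l; eauto. }
  apply (proj2 (Hgh e' H)). auto.
Qed.

Theorem mgu_exists (E : list (term * term)) :
  NoDup (flat_map (fun e => vars (fst e) ++ vars (snd e)) E) ->
  (exists tau, unifies tau E) -> is_mgu (mgu_of E) E.
Proof.
  intros Hnd [tau Htau].
  set (B := ubinds E).
  assert (NB : NoDup (keys B ++ vals B)).
  { assert (H1 : NoDup (flat_map (fun e => keys (unif (fst e) (snd e)) ++ vals (unif (fst e) (snd e))) E)).
    { eapply nodup_flat_map_sub; eauto. intros e He. apply U2; auto. }
    eapply Permutation_NoDup; [|exact H1].
    assert (EK : keys B = flat_map (fun e => keys (unif (fst e) (snd e))) E).
    { unfold B, ubinds, keys. clear. induction E; simpl; auto. rewrite map_app. congruence. }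
    assert (EV : vals B = flat_map (fun e => vals (unif (fst e) (snd e))) E).
    { unfold B, ubinds, vals. clear. induction E; simpl; auto. rewrite flat_map_app. congruence. }
    rewrite EK, EV. exact (flat_map_app_perm (fun e : term * term => keys (unif (fst e) (snd e))) (fun e => vals (unif (fst e) (snd e))) E). }
  assert (NK : NoDup (keys B)) by (eapply NoDup_app_remove_r; eauto).
  assert (Hin : forall x t, In (x, t) B -> mgu_of E x = t).
  { intros x t H. unfold mgu_of. fold B. rewrite (@find_key B x t NK H). auto. }
  assert (Hout : forall x, ~ In x (keys B) -> mgu_of E x = Var x).
  { intros x H. unfold mgu_of. fold B. rewrite find_none; auto. }
  split.
  - intros a b Hab. apply U3 with (b := b).
    + exists tau. apply Htau; auto.
    + intros x t H. apply Hin. unfold B, ubinds. apply in_flat_map. exists (a, b). auto.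
    + intros x t H y Hy. apply Hout. intros Hk. eapply nodup_app_disj; eauto.
      unfold vals. apply in_flat_map. exists (x, t). split; auto.
      unfold B, ubinds. apply in_flat_map. exists (a, b). auto.
  - intros tau' Htau'. exists tau'. intros x.
    destruct (in_dec Nat.eq_dec x (keys B)) as [Hk|Hk].
    + unfold keys in Hk. apply in_map_iff in Hk as [[y t] [Ey Hy]]. simpl in Ey. subst y.
      rewrite (Hin x t Hy). unfold B, ubinds in Hy. apply in_flat_map in Hy as [[a b] [Hab Hy]].
      exact (@U1 tau' a b (Htau' a b Hab) x t Hy).
    + rewrite Hout; auto.
Qed.

End Mgu.


Section Pos.
Variable F : Type.
Notation term := (term F).

Lemma nth_error_map_nth_same (g : term -> term) ts i :
  nth_error (Defs.map_nth g i ts) i = option_map g (nth_error ts i).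
Proof. revert i; induction ts; intros [|i]; simpl; auto. Qed.

Lemma nth_error_map_nth_diff (g : term -> term) ts i j : i <> j ->
  nth_error (Defs.map_nth g i ts) j = nth_error ts j.
Proof. revert i j; induction ts; intros [|i] [|j] H; simpl; auto. congruence. Qed.

Lemma prefix_nil p : prefix [] p.
Proof. exists p. auto. Qed.

Lemma valid_replace p : forall (T v : term) q, subterm_at T p <> None -> subterm_at T q <> None -> parallel p q ->
  subterm_at (replace_at T p v) q <> None.
Proof.
  induction p as [|i p IH]; intros T v q Hp Hq Hpq.
  - exfalso. apply (proj1 Hpq). apply prefix_nil.
  - destruct q as [|j q]. exfalso. apply (proj2 Hpq). apply prefix_nil.
    destruct T as [x|f ts]; [simpl in Hp; congruence|]. simpl in *.
    destruct (Nat.eq_dec i j) as [<-|Hij].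
    + rewrite nth_error_map_nth_same. destruct (nth_error ts i) as [u|]; [|congruence]. simpl.
      apply IH; auto. destruct Hpq as [H1 H2]. split; intros [r Hr]; [apply H1|apply H2]; exists r; simpl; congruence.
    + rewrite nth_error_map_nth_diff; auto.
Qed.

Lemma map_map_nth (h g g' : term -> term) i ts :
  (forall a, nth_error ts i = Some a -> h (g a) = g' (h a)) ->
  map h (Defs.map_nth g i ts) = Defs.map_nth g' i (map h ts).
Proof.
  revert i; induction ts as [|a ts IH]; intros [|i] H; simpl in *; auto.
  - f_equal. apply H. auto.
  - f_equal. apply IH. auto.
Qed.

Lemma subst_replace p : forall (T v : term) (d : nat -> term), subterm_at T p <> None ->
  apply_subst d (replace_at T p v) = replace_at (apply_subst d T) p (apply_subst d v).
Proof.
  induction p as [|i p IH]; intros T v d Hp.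
  - rewrite !replace_nil. auto.
  - destruct T as [x|f ts]; [simpl in Hp; congruence|]. simpl in *. f_equal.
    apply map_map_nth. intros a Ha. rewrite Ha in Hp. apply IH. auto.
Qed.

Definition frepl (T : term) (ps : list (pos * term)) :=
  fold_left (fun acc pv => replace_at acc (fst pv) (snd pv)) ps T.

Lemma FR (ps : list (pos * term)) : forall (T : term) (d : nat -> term),
  (forall pv, In pv ps -> subterm_at T (fst pv) <> None) ->
  ForallOrdPairs (fun a b => parallel (fst a) (fst b)) ps ->
  apply_subst d (frepl T ps) = frepl (apply_subst d T) (map (fun pv => (fst pv, apply_subst d (snd pv))) ps).
Proof.
  induction ps as [|[p v] ps IH]; intros T d Hv Hfop; simpl; auto.
  inversion Hfop; subst. unfold frepl in *. simpl. rewrite IH.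
  - rewrite subst_replace; auto. apply (Hv (p, v)); simpl; auto.
  - intros pv Hpv. apply valid_replace. apply (Hv (p, v)); simpl; auto. apply Hv; simpl; auto.
    rewrite Forall_forall in H1. apply (H1 pv Hpv).
  - auto.
Qed.

Lemma fold_left_map' (X Y Z : Type) (f : Z -> Y -> Z) (g : X -> Y) l a :
  fold_left f (map g l) a = fold_left (fun acc x => f acc (g x)) l a.
Proof. revert a; induction l; simpl; auto. Qed.

Lemma map_inj_nodup (X Y : Type) (f : X -> Y) l : (forall x y, f x = f y -> x = y) -> NoDup l -> NoDup (map f l).
Proof.
  intros Hi. induction 1; simpl; constructor; auto.
  intros Hin. apply in_map_iff in Hin as [y [E Hy]]. apply Hi in E. subst. auto.
Qed.

Lemma FOP_map_inv (X Y : Type) (Rl : Y -> Y -> Prop) (g : X -> Y) l :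
  ForallOrdPairs Rl (map g l) -> ForallOrdPairs (fun a b => Rl (g a) (g b)) l.
Proof.
  induction l as [|a l IH]; simpl; intros H; [constructor|].
  inversion H as [|x y Hf Hr]; subst. constructor.
  - apply (proj1 (Forall_map g (Rl (g a)) l)) in Hf. exact Hf.
  - apply IH. exact Hr.
Qed.

Lemma lt_list_max x L : In x L -> x < S (list_max L).
Proof.
  intros H. assert (Forall (fun k => k <= list_max L) L) by (apply list_max_le; auto).
  rewrite Forall_forall in H0. specialize (H0 x H). lia.
Qed.

End Pos.

Section Swap.
Definition swp (N k x : nat) : nat :=
  if x <? N then x + k * N else if (k * N <=? x) && (x <? k * N + N) then x - k * N else x.

Lemma swp_inv N k x : swp N k (swp N k x) = x.
Proof.
  unfold swp. assert (HM : k * N = 0 \/ N <= k * N) by (destruct k; [left; lia|right; nia]).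
  remember (k * N) as M. clear HeqM.
  destruct (Nat.ltb_spec x N).
  - destruct (Nat.ltb_spec (x + M) N); [lia|].
    destruct (Nat.leb_spec M (x + M)); [|lia].
    destruct (Nat.ltb_spec (x + M) (M + N)); simpl; lia.
  - destruct (Nat.leb_spec M x); destruct (Nat.ltb_spec x (M + N)); simpl.
    + destruct (Nat.ltb_spec (x - M) N); [lia|]. exfalso; lia.
    + destruct (Nat.ltb_spec x N); [lia|]. destruct (Nat.leb_spec M x); [|lia].
      destruct (Nat.ltb_spec x (M + N)); simpl; lia.
    + destruct (Nat.ltb_spec x N); [lia|]. destruct (Nat.leb_spec M x); [lia|]. simpl; lia.
    + destruct (Nat.ltb_spec x N); [lia|]. destruct (Nat.leb_spec M x); [lia|]. simpl; lia.
Qed.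

Lemma swp_small N k x : x < N -> swp N k x = x + k * N.
Proof. intros H. unfold swp. destruct (Nat.ltb_spec x N); lia. Qed.

Lemma swp_renaming N k : renaming (swp N k).
Proof. exists (swp N k). split; intros; apply swp_inv. Qed.
End Swap.


Section Core.
Variable F : Type.
Notation term := (term F).
Variable R C : rule F -> Prop.
Hypothesis Rll : left_linear R.
Hypothesis RTRS : TRS R.
Hypothesis Hpcp : forall t u, pcp R t u -> conv C t u.

Definition ren (rho : nat -> nat) (rl : rule F) : rule F :=
  (apply_subst (fun x => Var (rho x)) (fst rl), apply_subst (fun x => Var (rho x)) (snd rl)).

Fixpoint mkSteps (N k : nat) (Ps : list (stp F)) : list (pos * rule F) :=
  match Ps with
  | [] => []
  | st :: Ps' => (spos st, ren (swp N k) (srule st)) :: mkSteps N (S k) Ps'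
  end.

Fixpoint tauL (N k : nat) (Ps : list (stp F)) (d : nat -> term) (x : nat) : term :=
  match Ps with
  | [] => d x
  | st :: Ps' => if (k * N <=? x) && (x <? k * N + N) then sth st (x - k * N) else tauL N (S k) Ps' d x
  end.

Lemma tauL_small N k Ps d x : 1 <= k -> x < N -> tauL N k Ps d x = d x.
Proof.
  revert k; induction Ps as [|st Ps IH]; intros k Hk Hx; simpl; auto.
  destruct (Nat.leb_spec (k * N) x); simpl. nia. apply IH; lia.
Qed.

Lemma tauL_block N k Ps d j st x : x < N -> nth_error Ps j = Some st ->
  tauL N k Ps d (x + (k + j) * N) = sth st x.
Proof.
  revert k j; induction Ps as [|st' Ps IH]; intros k j Hx Hj; [destruct j; discriminate|].
  simpl. destruct j as [|j].
  - simpl in Hj. injection Hj as ->. rewrite Nat.add_0_r.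
    destruct (Nat.leb_spec (k * N) (x + k * N)); [|lia].
    destruct (Nat.ltb_spec (x + k * N) (k * N + N)); [|lia]. simpl. f_equal. lia.
  - simpl in Hj. destruct (Nat.leb_spec (k * N) (x + (k + S j) * N)); simpl.
    + destruct (Nat.ltb_spec (x + (k + S j) * N) (k * N + N)). nia.
      replace (k + S j) with (S k + j) by lia. apply IH; auto.
    + replace (k + S j) with (S k + j) by lia. apply IH; auto.
Qed.

Lemma mkSteps_fst N k Ps : map fst (mkSteps N k Ps) = map spos Ps.
Proof. revert k; induction Ps; intros k; simpl; f_equal; auto. Qed.

Lemma rule_vars_ren rho rl : rule_vars (ren rho rl) = map rho (rule_vars rl).
Proof. unfold rule_vars, ren. simpl. rewrite !vars_subst_ren, map_app. auto. Qed.

Lemma variant_ren rho rl : renaming rho -> variant (ren rho rl) rl.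
Proof. intros H. exists rho. split; auto. Qed.

Lemma M5 N k Ps : 1 <= k -> (forall st, In st Ps -> forall x, In x (rule_vars (srule st)) -> x < N) ->
  Forall (fun rl => forall x, In x (rule_vars rl) -> k * N <= x) (map snd (mkSteps N k Ps)) /\
  ForallOrdPairs var_disjoint (map snd (mkSteps N k Ps)).
Proof.
  revert k; induction Ps as [|st Ps IH]; intros k Hk HN; simpl; [split; constructor|].
  destruct (IH (S k)) as [IH1 IH2]; [lia|intros st' Hst' x Hx; apply (HN st'); simpl; auto|].
  assert (Hh : forall x, In x (rule_vars (ren (swp N k) (srule st))) -> k * N <= x < k * N + N).
  { intros x Hx. rewrite rule_vars_ren in Hx. apply in_map_iff in Hx as [y [<- Hy]].
    pose proof (HN st (or_introl eq_refl) y Hy). rewrite swp_small; lia. }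
  split.
  - constructor. intros x Hx. apply Hh in Hx. lia.
    eapply Forall_impl; [|exact IH1]. intros rl H x Hx. apply H in Hx. nia.
  - constructor; auto. eapply Forall_impl; [|exact IH1]. intros rl H x Hx1 Hx2.
    apply Hh in Hx1. apply H in Hx2. nia.
Qed.

Definition Ef (l : term) (pr : pos * rule F) : term * term := (fst (snd pr), subt l (fst pr)).

Lemma M6 (l : term) N (tau : nat -> term) (s s2 : nat -> term) (Ps : list (stp F)) :
  forall k, 1 <= k ->
  (forall st, In st Ps -> R (srule st)) ->
  (forall st, In st Ps -> forall x, In x (rule_vars (srule st)) -> x < N) ->
  (forall x, In x (vars l) -> x < N) ->
  Forall (fun st => fun_pos l (spos st) /\
     apply_subst (sth st) (fst (srule st)) = apply_subst s (subt l (spos st)) /\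
     (forall x, In x (vars (subt l (spos st))) -> s2 x = s x)) Ps ->
  (forall x, x < N -> tau x = s2 x) ->
  (forall j st x, nth_error Ps j = Some st -> x < N -> tau (x + (k + j) * N) = sth st x) ->
  unifies tau (map (Ef l) (mkSteps N k Ps)) /\
  map (fun pr => (fst pr, apply_subst tau (snd (snd pr)))) (mkSteps N k Ps) = map (fun st => (spos st, sval st)) Ps.
Proof.
  induction Ps as [|st Ps IH]; intros k Hk HR HN Hl HF Ht1 Ht2; simpl.
  - split; auto. intros a b [].
  - inversion HF as [|x y [Hfp [He Hag]] HF']; subst.
    assert (Hren : forall t, (forall x, In x (vars t) -> x < N) ->
       apply_subst tau (apply_subst (fun x => Var (swp N k x)) t) = apply_subst (sth st) t).
    { intros t Ht. rewrite subst_comp. apply subst_ext. intros x Hx. simpl.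
      rewrite swp_small by (apply Ht; auto). specialize (Ht2 0 st x eq_refl (Ht x Hx)).
      rewrite Nat.add_0_r in Ht2. auto. }
    destruct (srule st) as [lp rp] eqn:Esr.
    assert (Hlp : forall x, In x (vars lp) -> x < N).
    { intros x Hx. apply (HN st); simpl; auto. rewrite Esr. unfold rule_vars. simpl. apply in_or_app; auto. }
    assert (Hrp : forall x, In x (vars rp) -> x < N).
    { intros x Hx. apply (HN st); simpl; auto. rewrite Esr. unfold rule_vars. simpl. apply in_or_app; auto. }
    destruct (IH (S k)) as [IH1 IH2]; auto; try lia.
    { intros; apply HR; simpl; auto. }
    { intros; eapply HN; simpl; eauto. }
    { intros j st' x Hj Hx. replace (S k + j) with (k + S j) by lia. apply Ht2; auto. }
    split.
    + intros a b [Hab|Hab].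
      * unfold Ef in Hab. simpl in Hab. injection Hab as <- <-.
        rewrite Hren by auto. simpl in He. rewrite He.
        apply subst_ext. intros x Hx. rewrite Ht1. symmetry. apply Hag; auto.
        destruct Hfp as [g [gs Hg]]. unfold subt in Hx. rewrite Hg in Hx. apply Hl.
        eapply subterm_vars_in; eauto.
      * apply IH1; auto.
    + f_equal; auto. unfold sval. rewrite Esr. simpl. f_equal. apply Hren. auto.
Qed.

Lemma M7 (l : term) N (Ps : list (stp F)) : forall k, 1 <= k ->
  (forall st, In st Ps -> NoDup (vars (fst (srule st)))) ->
  (forall st, In st Ps -> forall x, In x (rule_vars (srule st)) -> x < N) ->
  (forall x, In x (vars l) -> x < N) ->
  Forall (fun st => fun_pos l (spos st)) Ps ->
  NoDup (flat_map (fun st => vars (subt l (spos st))) Ps) ->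
  NoDup (flat_map (fun e => vars (fst e) ++ vars (snd e)) (map (Ef l) (mkSteps N k Ps))) /\
  (forall y, In y (flat_map (fun e => vars (fst e) ++ vars (snd e)) (map (Ef l) (mkSteps N k Ps))) ->
     (y < N /\ In y (flat_map (fun st => vars (subt l (spos st))) Ps)) \/ k * N <= y).
Proof.
  induction Ps as [|st Ps IH]; intros k Hk Hnd HN Hl HF Hsub; simpl; [split; [constructor|intros y []]|].
  inversion HF as [|x y Hfp HF']; subst.
  destruct (IH (S k)) as [IH1 IH2]; auto; try lia.
  { intros; apply Hnd; simpl; auto. }
  { intros; eapply HN; simpl; eauto. }
  { simpl in Hsub. eapply NoDup_app_remove_l; eauto. }
  assert (Hsv : forall x, In x (vars (subt l (spos st))) -> x < N).
  { intros x Hx. destruct Hfp as [g [gs Hg]]. unfold subt in Hx. rewrite Hg in Hx. apply Hl.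
    eapply subterm_vars_in; eauto. }
  assert (Hlp : forall y, In y (vars (fst (ren (swp N k) (srule st)))) -> k * N <= y < k * N + N).
  { intros y Hy. unfold ren in Hy. simpl in Hy. rewrite vars_subst_ren in Hy.
    apply in_map_iff in Hy as [x [<- Hx]].
    assert (x < N). { apply (HN st); simpl; auto. unfold rule_vars. apply in_or_app; auto. }
    rewrite swp_small; lia. }
  unfold Ef at 1. simpl. simpl in Hsub.
  split.
  - rewrite <- app_assoc. apply nodup_app_iff. split; [|split].
    + unfold ren. simpl. rewrite vars_subst_ren. apply map_inj_nodup; [|apply Hnd; simpl; auto].
      intros a b E. rewrite <- (swp_inv N k a), <- (swp_inv N k b). congruence.
    + apply nodup_app_iff. split; [eapply NoDup_app_remove_r; eauto|]. split; auto.
      intros x Hx Hx2. destruct (IH2 x Hx2) as [[_ Hx3]|Hx3].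
      * eapply nodup_app_disj; eauto.
      * pose proof (Hsv x Hx). nia.
    + intros y Hy Hy2. apply Hlp in Hy. apply in_app_or in Hy2 as [Hy2|Hy2].
      * apply Hsv in Hy2. nia.
      * destruct (IH2 y Hy2) as [[Hy3 _]|Hy3]; nia.
  - intros y Hy. rewrite <- app_assoc in Hy. apply in_app_or in Hy as [Hy|Hy].
    + right. apply Hlp in Hy. lia.
    + apply in_app_or in Hy as [Hy|Hy].
      * left. split; auto. apply in_or_app; auto.
      * destruct (IH2 y Hy) as [[Hy3 Hy4]|Hy3].
        -- left. split; auto. apply in_or_app; auto.
        -- right. nia.
Qed.

Lemma Core A (HA : forall lr, A lr -> R lr) l r (s : nat -> term) u :
  R (l, r) -> par A (apply_subst s l) u ->
  exists s2, (forall x, In x (vars l) -> par A (s x) (s2 x)) /\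
    (u = apply_subst s2 l \/ conv C u (apply_subst s2 r)).
Proof.
  intros HR Hp.
  destruct (Dec l (Rll HR) s Hp) as [Ps [s2 [D1 [D2 [D3 [[rest D4] D5]]]]]].
  destruct Ps as [|st0 Ps0] eqn:EPs.
  { exists s2. split; auto. }
  rewrite <- EPs in *.
  set (N := S (list_max (rule_vars (l, r) ++ flat_map (fun st => rule_vars (srule st)) Ps))).
  assert (HNl : forall x, In x (rule_vars (l, r)) -> x < N).
  { intros x Hx. apply lt_list_max. apply in_or_app; auto. }
  assert (HNs : forall st, In st Ps -> forall x, In x (rule_vars (srule st)) -> x < N).
  { intros st Hst x Hx. apply lt_list_max. apply in_or_app; right. apply in_flat_map; eauto. }
  assert (HNl' : forall x, In x (vars l) -> x < N).
  { intros; apply HNl. unfold rule_vars. apply in_or_app; auto. }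
  assert (HNr' : forall x, In x (vars r) -> x < N).
  { intros; apply HNl. unfold rule_vars. apply in_or_app; auto. }
  assert (HRs : forall st, In st Ps -> R (srule st)).
  { intros st Hst. rewrite Forall_forall in D2. apply HA. apply D2; auto. }
  assert (Hwf : forall st, In st Ps -> incl (vars (snd (srule st))) (vars (fst (srule st)))).
  { intros st Hst. pose proof (HRs st Hst). destruct (srule st). apply (RTRS H). }
  destruct (classic (exists st, Ps = [st] /\ spos st = [] /\ variant (ren (swp N 1) (srule st)) (l, r)))
    as [[st [E1 [E2 [rho [Hrho [V1 V2]]]]]]|Hno].
  -
    exists s. split; [intros; apply par_refl|]. right.
    rewrite Forall_forall in D2. destruct (D2 st) as [_ [_ [Eq _]]]. rewrite E1; simpl; auto.
    rewrite E2 in Eq. unfold subt in Eq. simpl in Eq.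
    assert (Hu : u = sval st).
    { rewrite D5, E1. unfold repl. simpl. rewrite E2, replace_nil. auto. }
    rewrite Hu. unfold sval.
    destruct (srule st) as [lp rp] eqn:Esr. unfold ren in V1, V2. simpl in *.
    set (th2 := fun y => sth st (swp N 1 y)).
    assert (K : forall t, apply_subst (sth st) t = apply_subst th2 (apply_subst (fun x => Var (swp N 1 x)) t)).
    { intros t. rewrite subst_comp. apply subst_ext. intros x _. unfold th2. simpl. rewrite swp_inv. auto. }
    assert (Hag : forall x, In x (vars l) -> th2 (rho x) = s x).
    { apply subst_ext_inv. rewrite <- Eq, K, V1, subst_comp. apply subst_ext. intros; reflexivity. }
    rewrite K, V2, subst_comp. rewrite (@subst_ext F (fun x => apply_subst th2 (Var (rho x))) s r).
    apply rst_refl. intros x Hx. simpl. apply Hag. destruct (RTRS HR) as [_ Hi]. apply Hi. auto.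
  - set (steps := mkSteps N 1 Ps).
    set (E := map (Ef l) steps).
    set (tau := tauL N 1 Ps s2).
    assert (Ht1 : forall x, x < N -> tau x = s2 x). { intros; apply tauL_small; auto. }
    assert (Ht2 : forall j st x, nth_error Ps j = Some st -> x < N -> tau (x + (1 + j) * N) = sth st x).
    { intros. apply tauL_block; auto. }
    assert (D2' : Forall (fun st => fun_pos l (spos st) /\
     apply_subst (sth st) (fst (srule st)) = apply_subst s (subt l (spos st)) /\
     (forall x, In x (vars (subt l (spos st))) -> s2 x = s x)) Ps).
    { eapply Forall_impl; [|exact D2]. intros st [_ H]; exact H. }
    destruct (@M6 l N tau s s2 Ps 1) as [Hunif Hvals]; auto.
    assert (Hnd : NoDup (flat_map (fun st => vars (subt l (spos st))) Ps)).
    { pose proof (Permutation_NoDup D4 (Rll HR)) as H0.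
      eapply NoDup_app_remove_r. exact H0. }
    destruct (@M7 l N Ps 1) as [HndE _]; auto.
    { intros st Hst. pose proof (HRs st Hst). destruct (srule st). eapply Rll; eauto. }
    { eapply Forall_impl; [|exact D2']. intros st [H _]; exact H. }
    set (mu := mgu_of E).
    assert (Hmgu : is_mgu mu E). { apply mgu_exists; eauto. }
    set (t := fold_left (fun acc pr => replace_at acc (fst pr) (apply_subst mu (snd (snd pr)))) steps (apply_subst mu l)).
    assert (Hpc : pcp R t (apply_subst mu r)).
    { exists l, r, steps, mu. split; [|split; [|split; [|split; [|split; [|split; [|split; [|split]]]]]]].
      - exists (l, r). split; auto. exists (fun x => x). split. exists (fun x => x); auto.
        simpl. rewrite !subst_var. auto.
      - unfold steps. rewrite EPs. simpl. discriminate.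
      - unfold steps. clearbody N. clear -HRs D2'. generalize 1 as k. induction Ps as [|st Ps IH]; intros k; simpl; constructor.
        + inversion D2'; subst. split.
          * exists (srule st). split. apply HRs; simpl; auto. apply variant_ren, swp_renaming.
          * simpl. tauto.
        + apply IH. intros; apply HRs; simpl; auto. inversion D2'; auto.
      - unfold steps. apply FOP_map_inv with (Rl := parallel). rewrite mkSteps_fst.
        eapply FOP_map_in; eauto.
      - destruct (@M5 N 1 Ps) as [M51 M52]; auto. constructor; auto.
        eapply Forall_impl; [|exact M51]. intros rl H x Hx1 Hx2. apply HNl in Hx1. apply H in Hx2. lia.
      - exact Hmgu.
      - intros lr' Hs Hv. unfold steps in Hs. apply Hno. rewrite EPs in Hs. simpl in Hs.
        injection Hs as E1 E2 E3. destruct Ps0; [|discriminate].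
        exists st0. split; [auto|]. split; [auto|]. rewrite E2. exact Hv.
      - reflexivity.
      - reflexivity. }
    assert (HFs : ForallOrdPairs (fun a b => parallel (fst a) (fst b)) steps).
    { unfold steps. apply FOP_map_inv with (Rl := parallel). rewrite mkSteps_fst.
      eapply FOP_map_in; eauto. }
    pose proof (Hpcp Hpc) as Hc.
    destruct Hmgu as [_ Hgen]. destruct (Hgen tau Hunif) as [d Hd].
    apply conv_subst with (sg := d) in Hc.
    assert (Hcomp : forall t0, apply_subst d (apply_subst mu t0) = apply_subst tau t0).
    { intros t0. rewrite subst_comp. apply subst_ext. intros; symmetry; auto. }
    rewrite Hcomp in Hc.
    assert (Hr : apply_subst tau r = apply_subst s2 r).
    { apply subst_ext. intros; apply Ht1; auto. }
    assert (Hl : apply_subst tau l = apply_subst s2 l).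
    { apply subst_ext. intros; apply Ht1; auto. }
    assert (Ht : apply_subst d t = u).
    { unfold t. rewrite <- (fold_left_map' (fun acc pv => replace_at acc (fst pv) (snd pv))
         (fun pr : pos * rule F => (fst pr, apply_subst mu (snd (snd pr))))).
      change (apply_subst d (frepl (apply_subst mu l) (map (fun pr : pos * rule F => (fst pr, apply_subst mu (snd (snd pr)))) steps)) = u).
      rewrite FR.
      - assert (Hmap : map (fun pv => (fst pv, apply_subst d (snd pv))) (map (fun pr : pos * rule F => (fst pr, apply_subst mu (snd (snd pr)))) steps) = map (fun st => (spos st, sval st)) Ps).
        { rewrite map_map. rewrite <- Hvals. apply map_ext. intros [p [a b]]. simpl. rewrite Hcomp. auto. }
        rewrite Hmap, Hcomp, Hl, D5. unfold repl, frepl. rewrite fold_left_map'. reflexivity.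
      - intros pv Hpv. apply in_map_iff in Hpv as [pr [<- Hpr]]. simpl.
        assert (Hin : In (fst pr) (map spos Ps)).
        { rewrite <- (mkSteps_fst N 1). apply in_map. exact Hpr. }
        apply in_map_iff in Hin as [st [Est Hst]]. rewrite Forall_forall in D2'.
        destruct (D2' st Hst) as [[g [gs Hg]] _]. rewrite <- Est.
        erewrite subterm_subst; [discriminate|exact Hg].
      - eapply FOP_map_in; eauto. }
    exists s2. split; auto. right. rewrite <- Ht, <- Hr. exact Hc.
Qed.

End Core.


Section Final.
Variable F : Type.
Notation term := (term F).
Variable R C : rule F -> Prop.
Hypothesis Rll : left_linear R.
Hypothesis RTRS : TRS R.
Hypothesis CR : forall lr, C lr -> R lr.
Hypothesis Hpcp : forall t u, pcp R t u -> conv C t u.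

Lemma Rvars l r : R (l, r) -> forall x, In x (vars r) -> In x (vars l).
Proof. intros H. apply (proj2 (RTRS H)). Qed.

Lemma par_subst_r A l r (s s2 : nat -> term) : R (l, r) -> (forall x, In x (vars l) -> par A (s x) (s2 x)) ->
  par A (apply_subst s r) (apply_subst s2 r).
Proof. intros HR H. apply par_subst. intros; apply H. eapply Rvars; eauto. Qed.

Lemma conv_sym s t : conv C s t -> conv C t s.
Proof. apply rst_sym. Qed.
Lemma conv_trans s t u : conv C s t -> conv C t u -> conv C s u.
Proof. apply rst_trans. Qed.
Lemma conv_refl s : conv C s s.
Proof. apply rst_refl. Qed.

Lemma LL s w : cstep C s w -> forall u, par R s u -> exists u', par R w u' /\ conv C u u'.
Proof.
  induction 1 as [l r s HC|f ts1 t t' ts2 Hst IH]; intros u Hp.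
  - destruct (@Core F R C Rll RTRS Hpcp R (fun lr H => H) l r s u (CR HC) Hp) as [s2 [Hs2 [Eu|Eu]]].
    + exists (apply_subst s2 r). split. apply par_subst_r with l; auto.
      subst u. apply rsteps_conv, rsteps_step. constructor; auto.
    + exists (apply_subst s2 r). split; auto. apply par_subst_r with l; auto.
  - inversion Hp as [|f' ss us HF E1 E2|l r s0 HR E1 E2]; subst.
    + apply Forall2_app_inv_l in HF as [us1 [us2 [F1 [F2 ->]]]].
      destruct us2 as [|ut us2]; inversion F2; subst.
      destruct (IH ut) as [u't [P1 C1]]; auto.
      exists (Fun f (us1 ++ u't :: us2)). split.
      * constructor. apply Forall2_app; auto.
      * apply conv_ctx1. auto.
    + assert (Hc : par C (apply_subst s0 l) (Fun f (ts1 ++ t' :: ts2))).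
      { rewrite E1. apply cstep_par. constructor. auto. }
      destruct (@Core F R C Rll RTRS Hpcp C CR l r s0 _ HR Hc) as [s2 [Hs2 [Ew|Ew]]].
      * exists (apply_subst s2 r). split. rewrite Ew. constructor; auto.
        apply rsteps_conv, par_rsteps. apply par_subst_r with l; auto.
      * exists (Fun f (ts1 ++ t' :: ts2)). split. apply par_refl.
        eapply conv_trans. apply rsteps_conv, par_rsteps. apply par_subst_r with l; eauto.
        apply conv_sym; auto.
Qed.

Lemma LLs s w u : rsteps C s w -> par R s u -> exists u', par R w u' /\ conv C u u'.
Proof.
  intros Hs. revert u. apply rsteps_csteps in Hs. apply clos_rt_rt1n_iff in Hs.
  induction Hs as [|x y z Hxy Hs IH]; intros u Hp.
  - exists u. split; auto. apply conv_refl.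
  - destruct (LL Hxy Hp) as [u1 [P1 C1]]. destruct (IH u1 P1) as [u2 [P2 C2]].
    exists u2. split; auto. eapply conv_trans; eauto.
Qed.

Lemma DR l r (s : nat -> term) u2 : R (l, r) -> par R (apply_subst s l) u2 ->
  exists v1 v2, par R (apply_subst s r) v1 /\ par R u2 v2 /\ conv C v1 v2.
Proof.
  intros HR Hp.
  destruct (@Core F R C Rll RTRS Hpcp R (fun lr H => H) l r s u2 HR Hp) as [s2 [Hs2 [Eu|Eu]]].
  - exists (apply_subst s2 r), (apply_subst s2 r). split. apply par_subst_r with l; auto.
    split. subst. constructor; auto. apply conv_refl.
  - exists (apply_subst s2 r), u2. split. apply par_subst_r with l; auto. split. apply par_refl.
    apply conv_sym; auto.
Qed.

Lemma DD s : forall u1 u2, par R s u1 -> par R s u2 ->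
  exists v1 v2, par R u1 v1 /\ par R u2 v2 /\ conv C v1 v2.
Proof.
  induction s as [x|f ts IH] using term_ind'; intros u1 u2 H1 H2.
  - inversion H2 as [|f2 ss2 vs2 HF2|l2 r2 s2 HR2 E1 E2]; subst.
    + inversion H1 as [|f1 ss1 vs1 HF1|l1 r1 s1 HR1 E1 E2]; subst.
      * exists (Var x), (Var x). split; [constructor|split; [constructor|apply conv_refl]].
      * rewrite <- E1 in *. destruct (@DR _ _ _ _ HR1 H2) as [v1 [v2 [P1 [P2 C1]]]]. eauto 6.
    + rewrite <- E1 in *. destruct (@DR _ _ _ _ HR2 H1) as [v1 [v2 [P1 [P2 C1]]]].
      exists v2, v1. repeat split; auto. apply conv_sym; auto.
  - inversion H2 as [|f2 ss2 vs2 HF2|l2 r2 s2 HR2 E1 E2]; subst.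
    + inversion H1 as [|f1 ss1 vs1 HF1|l1 r1 s1 HR1 E1 E2]; subst.
      * assert (Hl : exists ws1 ws2, Forall2 (par R) vs1 ws1 /\ Forall2 (par R) vs2 ws2 /\ Forall2 (conv C) ws1 ws2).
        { clear H1 H2. revert vs1 vs2 HF1 HF2. induction IH as [|t ts Ht Hts IH2]; intros l1 l2 A1 A2;
            inversion A1 as [|a1 b1 la1 lb1 X1 Y1]; inversion A2 as [|a2 b2 la2 lb2 X2 Y2]; subst.
          - exists [], []. repeat constructor.
          - destruct (Ht _ _ X1 X2) as [w1 [w2 [P1 [P2 C1]]]].
            destruct (IH2 _ _ Y1 Y2) as [ws1 [ws2 [Q1 [Q2 Q3]]]].
            exists (w1 :: ws1), (w2 :: ws2). repeat split; constructor; auto. }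
        destruct Hl as [ws1 [ws2 [Q1 [Q2 Q3]]]].
        exists (Fun f ws1), (Fun f ws2). split; [constructor; auto|split; [constructor; auto|apply conv_ctx; auto]].
      * rewrite <- E1 in *. destruct (@DR _ _ _ _ HR1 H2) as [v1 [v2 [P1 [P2 C1]]]]. eauto 6.
    + rewrite <- E1 in *. destruct (@DR _ _ _ _ HR2 H1) as [v1 [v2 [P1 [P2 C1]]]].
      exists v2, v1. repeat split; auto. apply conv_sym; auto.
Qed.

Hypothesis Cconf : confluent C.

Lemma conv_join a b : conv C a b -> exists v, rsteps C a v /\ rsteps C b v.
Proof.
  induction 1.
  - exists y. split. apply rt_step; auto. apply rt_refl.
  - exists x. split; apply rt_refl.
  - destruct IHclos_refl_sym_trans as [v [H1 H2]]. eauto.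
  - destruct IHclos_refl_sym_trans1 as [v1 [A1 A2]]. destruct IHclos_refl_sym_trans2 as [v2 [B1 B2]].
    destruct (Cconf A2 B1) as [w [W1 W2]]. exists w. split; eapply rt_trans; eauto.
Qed.

Definition Q (a b : term) := exists a', conv C a a' /\ par R a' b.

Lemma Q_left a0 a b : conv C a0 a -> Q a b -> Q a0 b.
Proof. intros H [a' [H1 H2]]. exists a'. split; auto. eapply conv_trans; eauto. Qed.

Lemma Q_conv a b : conv C a b -> Q a b.
Proof. intros H. exists b. split; auto. apply par_refl. Qed.

Lemma Q_diamond a b1 b2 : Q a b1 -> Q a b2 -> exists c1 c2, Q b1 c1 /\ Q b2 c2 /\ conv C c1 c2.
Proof.
  intros [a1 [C1 P1]] [a2 [C2 P2]].
  destruct (conv_join (conv_trans (conv_sym C1) C2)) as [w [W1 W2]].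
  destruct (LLs W1 P1) as [b1' [Q1 D1]]. destruct (LLs W2 P2) as [b2' [Q2 D2]].
  destruct (DD Q1 Q2) as [c1 [c2 [E1 [E2 E3]]]].
  exists c1, c2. split; [|split]; auto; eexists; split; eauto.
Qed.

Definition Qs := clos_refl_trans_1n term Q.

Lemma Qs_left a0 a b : conv C a0 a -> Qs a b -> Qs a0 b.
Proof.
  intros H Hs. inversion Hs; subst.
  - apply Relation_Operators.rt1n_trans with b. apply Q_conv; auto. constructor.
  - apply Relation_Operators.rt1n_trans with y; auto. eapply Q_left; eauto.
Qed.


Lemma strip a b1 b2 : Q a b1 -> Qs a b2 -> exists c1 c2, Qs b1 c1 /\ Q b2 c2 /\ conv C c1 c2.
Proof.
  intros H1 H2. revert b1 H1. induction H2 as [a|a x b2 Hax Hxb IH]; intros b1 H1.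
  - exists b1, b1. split; [constructor|]. split; auto. apply conv_refl.
  - destruct (Q_diamond H1 Hax) as [d1 [d2 [D1 [D2 D3]]]].
    destruct (IH d2 D2) as [e1 [e2 [E1 [E2 E3]]]].
    exists e1, e2. split; auto. econstructor; eauto. eapply Qs_left; eauto.
Qed.

Lemma Qconfl a b1 b2 : Qs a b1 -> Qs a b2 -> exists c1 c2, Qs b1 c1 /\ Qs b2 c2 /\ conv C c1 c2.
Proof.
  intros H1. revert b2. induction H1 as [a|a x b1 Hax Hxb IH]; intros b2 H2.
  - exists b2, b2. split; auto. split; [constructor|apply conv_refl].
  - destruct (strip Hax H2) as [c1 [c2 [S1 [S2 S3]]]].
    destruct (IH c1 S1) as [e1 [e2 [E1 [E2 E3]]]].
    exists e1, e2. split; auto. split; auto. econstructor; eauto. eapply Qs_left; eauto. apply conv_sym; auto.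
Qed.

Lemma Qs_lift a b : Qs a b -> forall a0, conv C a0 a -> exists b', rsteps R a0 b' /\ conv C b' b.
Proof.
  induction 1 as [a|a x b Hax Hxb IH]; intros a0 H0.
  - exists a0. split; auto. apply rt_refl.
  - destruct Hax as [a' [Ca Pa]].
    destruct (conv_join (conv_trans H0 Ca)) as [w [W1 W2]].
    destruct (LLs W2 Pa) as [x' [Px Cx]].
    destruct (IH x' (conv_sym Cx)) as [b' [Rb Cb]].
    exists b'. split; auto. eapply rt_trans. apply (@rsteps_mono F C R _ _ CR W1).
    eapply rt_trans. apply par_rsteps; eauto. auto.
Qed.

Theorem D1 : confluent R.
Proof.
  intros s t1 t2 H1 H2.
  assert (HQ : forall a b, rsteps R a b -> Qs a b).
  { intros a b H. apply rsteps_csteps in H. apply clos_rt_rt1n_iff in H.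
    induction H. constructor. econstructor; eauto. exists x. split. apply conv_refl.
    apply cstep_par; auto. }
  destruct (Qconfl (HQ _ _ H1) (HQ _ _ H2)) as [c1 [c2 [Q1 [Q2 Q3]]]].
  destruct (Qs_lift Q1 (conv_refl t1)) as [c1' [R1 E1]].
  destruct (Qs_lift Q2 (conv_refl t2)) as [c2' [R2 E2]].
  destruct (conv_join (conv_trans E1 (conv_trans Q3 (conv_sym E2)))) as [w [W1 W2]].
  exists w. split; eapply rt_trans; eauto; apply (@rsteps_mono F C R _ _ CR); auto.
Qed.

End Final.

Unset Implicit Arguments.

Theorem corollary15 (F : Type) (R C : rule F -> Prop) :
  TRS R -> left_linear R ->
  (forall lr, C lr -> R lr) ->
  (forall t u, pcp R t u -> conv C t u) ->
  (forall l r, restrict R C (l, r) -> rsteps C l r) ->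
  (confluent R <-> confluent C).
Proof.
  intros HT Hll HCR Hp Hres. split.
  - intros HRc. refine (@D2 F C _ _ R HCR Hres HRc).
    + intros l r H. apply (Hll l r). apply HCR; auto.
    + intros l r H. apply (HT (l, r)). apply HCR; auto.
  - intros Hc. eapply D1; eauto.
Qed.
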